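(* Let $D\subset\mathbb{C}$ be a domain, let $h$ be holomorphic on $D$ with $h'$ nowhere zero, and put $g(w)=1/h'(w)$, $w=x+iy$. Let $\varphi(x,y)=\operatorname{Re} h(w)$ and $\psi(x,y)=\frac{\operatorname{Re} g'(w)}{|g(w)|^2}$. Then $\psi$ depends only on $\varphi$ (i.e. the Jacobian $\frac{\partial(\varphi,\psi)}{\partial(x,y)}$ vanishes identically on $D$) if and only if $$g\,g''-(g')^2=c$$ on $D$ for some real constant $c$. *)

(* Defs.v *)
From Stdlib Require Import Reals ClassicalEpsilon.
From Coquelicot Require Import Coquelicot.
Open Scope R_scope.

Definition C_is_derive (f : C -> C) (z l : C) : Prop :=
  @is_derive C_AbsRing C_NormedModule f z l.

Definition holomorphic_on (D : C -> Prop) (f : C -> C) : Prop :=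
  forall z, D z -> exists l : C, C_is_derive f z l.

(* The complex derivative f'(z) (chosen by description; meaningful where
   f is complex differentiable, where it is unique). *)
Definition C_Derive (f : C -> C) (z : C) : C :=
  epsilon (inhabits (RtoC 0)) (fun l : C => C_is_derive f z l).

Definition connected_set (D : C -> Prop) : Prop :=
  forall U V : C -> Prop, @open C_UniformSpace U -> @open C_UniformSpace V ->
    (forall z, D z -> U z \/ V z) ->
    (exists z, D z /\ U z) -> (exists z, D z /\ V z) ->
    exists z, D z /\ U z /\ V z.

Definition is_domain (D : C -> Prop) : Prop :=
  @open C_UniformSpace D /\ connected_set D /\ exists z, D z.

Definition jacobian (phi psi : R -> R -> R) (x y : R) : R :=
  Derive (fun t => phi t y) x * Derive (fun t => psi x t) y
  - Derive (fun t => phi x t) y * Derive (fun t => psi t y) x.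

(* Main.v *)
Require Import Defs.
From Stdlib Require Import Reals Lra Lia ZArith ClassicalEpsilon FunctionalExtensionality.
From Coquelicot Require Import Coquelicot.
Open Scope R_scope.

Definition Dd (f : C -> C) (z l : C) : Prop :=
  forall eps, 0 < eps -> exists del, 0 < del /\ forall w,
    Cmod (Cminus w z) < del ->
    Cmod (Cminus (Cminus (f w) (f z)) (Cmult (Cminus w z) l)) <= eps * Cmod (Cminus w z).

Lemma Cder_Dd f z l : C_is_derive f z l -> Dd f z l.
Proof.
  intros [_ H] eps Heps.
  specialize (H z (fun P HP => HP)).
  specialize (H (mkposreal eps Heps)).
  destruct H as [del Hd].
  exists del. split. apply cond_pos.
  intros w Hw. apply Hd. exact Hw.
Qed.

Lemma Dd_Cder f z l : Dd f z l -> C_is_derive f z l.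
Proof.
  intros H. split.
  - apply is_linear_scal_l.
  - intros x Hx. 
    assert (z = x) as E by (apply (@is_filter_lim_locally_unique C_AbsRing (AbsRing_NormedModule C_AbsRing)); exact Hx); symmetry in E.
    subst x. intros eps. destruct (H eps (cond_pos eps)) as [del [Hdel Hd]].
    exists (mkposreal del Hdel). intros w Hw. apply Hd. exact Hw.
Qed.

Lemma Dd_A f z l : Dd f z l -> @is_derive C_AbsRing (AbsRing_NormedModule C_AbsRing) f z l.
Proof.
  intros H. split.
  - apply is_linear_scal_l.
  - intros x Hx. 
    assert (z = x) as E by (apply (@is_filter_lim_locally_unique C_AbsRing (AbsRing_NormedModule C_AbsRing)); exact Hx); symmetry in E.
    subst x. intros eps. destruct (H eps (cond_pos eps)) as [del [Hdel Hd]].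
    exists (mkposreal del Hdel). intros w Hw. apply Hd. exact Hw.
Qed.

Lemma A_Dd f z l : @is_derive C_AbsRing (AbsRing_NormedModule C_AbsRing) f z l -> Dd f z l.
Proof.
  intros [_ H] eps Heps.
  specialize (H z (fun P HP => HP)).
  specialize (H (mkposreal eps Heps)).
  destruct H as [del Hd].
  exists del. split. apply cond_pos.
  intros w Hw. apply Hd. exact Hw.
Qed.

Lemma Dd_unique f z l1 l2 : Dd f z l1 -> Dd f z l2 -> l1 = l2.
Proof.
  intros H1 H2. apply Dd_Cder in H1. apply Dd_Cder in H2.
  apply is_C_derive_unique in H1. apply is_C_derive_unique in H2. congruence.
Qed.

Lemma CDerive_eq f z l : Dd f z l -> C_Derive f z = l.
Proof.
  intros H. unfold C_Derive.
  apply Dd_unique with f z; auto.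
  apply Cder_Dd. apply epsilon_spec. exists l. apply Dd_Cder. exact H.
Qed.

Lemma Dd_mult f g z a b : Dd f z a -> Dd g z b ->
  Dd (fun w => Cmult (f w) (g w)) z (Cplus (Cmult a (g z)) (Cmult (f z) b)).
Proof. intros Ha Hb. apply A_Dd.
apply (@is_derive_mult C_AbsRing f g z a b (Dd_A _ _ _ Ha) (Dd_A _ _ _ Hb)). intros; apply Cmult_comm. Qed.

Lemma Dd_plus f g z a b : Dd f z a -> Dd g z b ->
  Dd (fun w => Cplus (f w) (g w)) z (Cplus a b).
Proof. intros Ha Hb. apply A_Dd.
apply (@is_derive_plus C_AbsRing (AbsRing_NormedModule C_AbsRing) f g z a b (Dd_A _ _ _ Ha) (Dd_A _ _ _ Hb)). Qed.

Lemma Dd_minus f g z a b : Dd f z a -> Dd g z b ->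
  Dd (fun w => Cminus (f w) (g w)) z (Cminus a b).
Proof. intros Ha Hb. apply A_Dd.
apply (@is_derive_minus C_AbsRing (AbsRing_NormedModule C_AbsRing) f g z a b (Dd_A _ _ _ Ha) (Dd_A _ _ _ Hb)). Qed.

Lemma Dd_const (c : C) z : Dd (fun _ => c) z (RtoC 0).
Proof. apply A_Dd. apply (@is_derive_const C_AbsRing (AbsRing_NormedModule C_AbsRing) c z). Qed.

Lemma Dd_id z : Dd (fun w => w) z (RtoC 1).
Proof. apply A_Dd. apply (@is_derive_id C_AbsRing z). Qed.

Lemma Dd_comp f g z a b : Dd f (g z) a -> Dd g z b -> Dd (fun w => f (g w)) z (Cmult b a).
Proof. intros Ha Hb. apply A_Dd.
apply (@is_derive_comp C_AbsRing (AbsRing_NormedModule C_AbsRing) f g z a b (Dd_A _ _ _ Ha) (Dd_A _ _ _ Hb)). Qed.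

Lemma Dd_ext f g z l : Dd f z l -> (forall w, f w = g w) -> Dd g z l.
Proof. intros H E eps Heps. destruct (H eps Heps) as [d [Hd H']]. exists d. split; auto.
intros w Hw. rewrite <- !E. auto. Qed.

Lemma Cmod_minus_ge (a b : C) : Cmod a - Cmod b <= Cmod (Cminus a b).
Proof. assert (a = Cplus (Cminus a b) b) as E by (unfold Cminus; ring).
 pose proof (Cmod_triangle (Cminus a b) b). rewrite <- E in H. lra. Qed.

Lemma Dd_inv0 w0 : w0 <> RtoC 0 -> Dd Cinv w0 (Copp (Cinv (Cmult w0 w0))).
Proof.
  intros Hw0 eps Heps. set (r := Cmod w0).
  assert (Hr : 0 < r) by (apply Cmod_gt_0; auto).
  exists (Rmin (r/2) (eps * r * r * r / 2)). split.
  { apply Rmin_pos; try lra. apply Rmult_lt_0_compat; try lra. repeat apply Rmult_lt_0_compat; lra. }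
  intros w Hw.
  assert (Hw1 : Cmod (Cminus w w0) < r/2) by (eapply Rlt_le_trans; [exact Hw| apply Rmin_l]).
  assert (Hw2 : Cmod (Cminus w w0) < eps * r * r * r / 2) by (eapply Rlt_le_trans; [exact Hw| apply Rmin_r]).
  assert (Hwr : r / 2 <= Cmod w).
  { pose proof (Cmod_minus_ge w0 w). assert (Cminus w0 w = Copp (Cminus w w0)) as E by (unfold Cminus; ring).
    rewrite E, Cmod_opp in H. fold r in H. lra. }
  assert (Hwn : w <> RtoC 0). { intro E. rewrite E, Cmod_0 in Hwr. lra. }
  replace (Cminus (Cminus (Cinv w) (Cinv w0)) (Cmult (Cminus w w0) (Copp (Cinv (Cmult w0 w0)))))
    with (Cdiv (Cmult (Cminus w w0) (Cminus w w0)) (Cmult w (Cmult w0 w0))) by (field; auto).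
  unfold Cdiv. rewrite Cmod_mult, Cmod_inv, !Cmod_mult. fold r.
  2: { repeat apply Cmult_neq_0; auto. }
  set (m := Cmod (Cminus w w0)). fold m in Hw1, Hw2.
  assert (0 <= m) by apply Cmod_ge_0.
  assert (0 < Cmod w * (r * r)) by (apply Rmult_lt_0_compat; nra).
  apply Rmult_le_reg_r with (Cmod w * (r * r)); auto.
  rewrite Rmult_assoc, Rinv_l by lra.
  assert (m * m <= m * (eps * r * r * r / 2)) by (apply Rmult_le_compat_l; lra).
  assert (eps * m * (r/2 * (r*r)) <= eps * m * (Cmod w * (r * r))).
  { apply Rmult_le_compat_l. nra. apply Rmult_le_compat_r; nra. }
  nra.
Qed.

Lemma Dd_inv f z a : Dd f z a -> f z <> RtoC 0 ->
  Dd (fun w => Cinv (f w)) z (Cmult a (Copp (Cinv (Cmult (f z) (f z))))).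
Proof. intros Ha Hn. apply (Dd_comp Cinv f z). apply Dd_inv0; auto. auto. Qed.

Definition ccont (f : C -> C) (z : C) : Prop :=
  forall eps, 0 < eps -> exists del, 0 < del /\ forall w,
    Cmod (Cminus w z) < del -> Cmod (Cminus (f w) (f z)) < eps.

Lemma Dd_ccont f z l : Dd f z l -> ccont f z.
Proof.
  intros H eps Heps. destruct (H 1 Rlt_0_1) as [d [Hd H1]].
  exists (Rmin d (eps / (1 + Cmod l + 1))). split.
  { apply Rmin_pos; auto. apply Rdiv_lt_0_compat; auto. pose proof (Cmod_ge_0 l); lra. }
  intros w Hw. specialize (H1 w (Rlt_le_trans _ _ _ Hw (Rmin_l _ _))).
  assert (Hw2 := Rlt_le_trans _ _ _ Hw (Rmin_r _ _)).
  assert (Cminus (f w) (f z) = Cplus (Cminus (Cminus (f w) (f z)) (Cmult (Cminus w z) l)) (Cmult (Cminus w z) l)) as E by (unfold Cminus; ring).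
  rewrite E. eapply Rle_lt_trans. apply Cmod_triangle. rewrite Cmod_mult.
  set (m := Cmod (Cminus w z)) in *. assert (0 <= m) by apply Cmod_ge_0.
  assert (0 <= Cmod l) by apply Cmod_ge_0.
  assert (m * (1 + Cmod l + 1) < eps).
  { apply Rmult_lt_reg_r with (/ (1 + Cmod l + 1)). apply Rinv_0_lt_compat; lra.
    rewrite Rmult_assoc, Rinv_r by lra. lra. }
  nra.
Qed.

Lemma Dd_loc f g z l r : 0 < r -> (forall w, Cmod (Cminus w z) < r -> f w = g w) -> Dd f z l -> Dd g z l.
Proof.
  intros Hr E H eps Heps. destruct (H eps Heps) as [d [Hd H1]].
  exists (Rmin d r). split. apply Rmin_pos; auto.
  intros w Hw. rewrite <- (E w), <- (E z). apply H1. eapply Rlt_le_trans; [exact Hw|apply Rmin_l].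
  unfold Cminus. rewrite Cplus_opp_r, Cmod_0. auto.
  eapply Rlt_le_trans; [exact Hw|apply Rmin_r].
Qed.

Definition Rd (F : R -> C) (t : R) (l : C) : Prop :=
  forall eps, 0 < eps -> exists del, 0 < del /\ forall s,
    Rabs (s - t) < del ->
    Cmod (Cminus (Cminus (F s) (F t)) (Cmult (RtoC (s - t)) l)) <= eps * Rabs (s - t).

Lemma scal_CR (a : R) (l : C) : @scal R_Ring C_R_ModuleSpace a l = Cmult (RtoC a) l.
Proof. destruct l as [l1 l2]. unfold scal; simpl. unfold prod_scal, Cmult; simpl.
 unfold scal; simpl. unfold mult; simpl. f_equal; ring. Qed.

Lemma norm_CR (c : C) : @norm R_AbsRing C_R_NormedModule c = Cmod c.
Proof. rewrite Cmod_norm. reflexivity. Qed.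

Lemma Rd_der F t l : Rd F t l -> @is_derive R_AbsRing C_R_NormedModule F t l.
Proof.
  intros H. split.
  - apply is_linear_scal_l.
  - intros x Hx.
    assert (t = x) as E by (apply (@is_filter_lim_locally_unique R_AbsRing R_NormedModule); exact Hx); symmetry in E.
    subst x. intros eps. destruct (H eps (cond_pos eps)) as [del [Hdel Hd]].
    exists (mkposreal del Hdel). intros w Hw. rewrite scal_CR, !norm_CR. apply Hd. exact Hw.
Qed.

Lemma Dd_line F (a v : C) t l : Dd F (Cplus a (Cmult (RtoC t) v)) l ->
  Rd (fun s => F (Cplus a (Cmult (RtoC s) v))) t (Cmult l v).
Proof.
  intros H eps Heps. set (k := Cmod v + 1).
  assert (Hk : 0 < k) by (unfold k; pose proof (Cmod_ge_0 v); lra).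
  destruct (H (eps / k)) as [d [Hd H1]]. apply Rdiv_lt_0_compat; auto.
  exists (d / k). split. apply Rdiv_lt_0_compat; auto.
  intros s Hs.
  assert (E : Cminus (Cplus a (Cmult (RtoC s) v)) (Cplus a (Cmult (RtoC t) v)) = Cmult (RtoC (s - t)) v).
  { unfold Cminus. rewrite RtoC_minus. ring. }
  assert (Em : Cmod (Cmult (RtoC (s - t)) v) = Rabs (s - t) * Cmod v) by (rewrite Cmod_mult, Cmod_R; auto).
  pose proof (Cmod_ge_0 v). pose proof (Rabs_pos (s - t)).
  specialize (H1 (Cplus a (Cmult (RtoC s) v))). rewrite E, Em in H1.
  replace (Cmult (RtoC (s - t)) (Cmult l v)) with (Cmult (Cmult (RtoC (s - t)) v) l) by ring.
  eapply Rle_trans. apply H1.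
  { assert (Hlt : Rabs (s - t) * k < d). { apply Rmult_lt_reg_r with (/k). apply Rinv_0_lt_compat; auto.
      rewrite Rmult_assoc, Rinv_r by lra. rewrite Rmult_1_r. exact Hs. }
    unfold k in Hlt. nra. }
  unfold Rdiv. assert (Hb : eps * / k * (Rabs (s - t) * Cmod v) <= eps * / k * (Rabs (s - t) * k)).
  { apply Rmult_le_compat_l. apply Rmult_le_pos. lra. left; apply Rinv_0_lt_compat; auto.
    apply Rmult_le_compat_l; auto. unfold k; lra. }
  replace (eps * / k * (Rabs (s - t) * k)) with (eps * Rabs (s - t)) in Hb by (field; lra). lra.
Qed.

Lemma ccont_line F (a v : C) t : ccont F (Cplus a (Cmult (RtoC t) v)) ->
  @continuous R_UniformSpace C_R_NormedModule (fun s => F (Cplus a (Cmult (RtoC s) v))) t.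
Proof.
  intros H. apply (@filterlim_locally_ball_norm R_AbsRing). apply locally_filter.
  intros eps. set (k := Cmod v + 1).
  assert (Hk : 0 < k) by (unfold k; pose proof (Cmod_ge_0 v); lra).
  destruct (H eps (cond_pos eps)) as [d [Hd H1]].
  exists (mkposreal (d / k) (Rdiv_lt_0_compat _ _ Hd Hk)). intros s Hs.
  change (Rabs (s - t) < d / k) in Hs.
  unfold ball_norm. rewrite norm_CR. apply H1.
  assert (E : Cminus (Cplus a (Cmult (RtoC s) v)) (Cplus a (Cmult (RtoC t) v)) = Cmult (RtoC (s - t)) v).
  { unfold Cminus. rewrite RtoC_minus. ring. }
  rewrite E, Cmod_mult, Cmod_R.
  pose proof (Cmod_ge_0 v). pose proof (Rabs_pos (s - t)).
  assert (Hlt : Rabs (s - t) * k < d). { apply Rmult_lt_reg_r with (/k). apply Rinv_0_lt_compat; auto.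
      rewrite Rmult_assoc, Rinv_r by lra. rewrite Rmult_1_r. exact Hs. }
  unfold k in Hlt. nra.
Qed.

Lemma Dd_eqv f z l l' : Dd f z l -> l = l' -> Dd f z l'.
Proof. intros H E; subst; auto. Qed.

Definition CI (f : R -> C) (a b : R) : C := @RInt C_R_CompleteNormedModule f a b.

Lemma is_RInt_Cmul (f : R -> C) a b (l al : C) :
  @is_RInt C_R_NormedModule f a b l ->
  @is_RInt C_R_NormedModule (fun t => Cmult al (f t)) a b (Cmult al l).
Proof.
  intros H. destruct al as [a1 a2]. destruct l as [l1 l2].
  pose proof (@is_RInt_fct_extend_fst R_NormedModule R_NormedModule f a b (l1,l2) H) as H1.
  pose proof (@is_RInt_fct_extend_snd R_NormedModule R_NormedModule f a b (l1,l2) H) as H2.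
  simpl in H1, H2.
  unfold Cmult; simpl.
  apply (@is_RInt_fct_extend_pair R_NormedModule R_NormedModule); simpl.
  - apply (is_RInt_minus (V:=R_NormedModule)).
    + apply (is_RInt_scal (V:=R_NormedModule) _ _ _ a1 _ H1).
    + apply (is_RInt_scal (V:=R_NormedModule) _ _ _ a2 _ H2).
  - apply (is_RInt_plus (V:=R_NormedModule)).
    + apply (is_RInt_scal (V:=R_NormedModule) _ _ _ a1 _ H2).
    + apply (is_RInt_scal (V:=R_NormedModule) _ _ _ a2 _ H1).
Qed.

Lemma CI_Cmul (f : R -> C) a b (al : C) : ex_RInt (V:=C_R_NormedModule) f a b ->
  CI (fun t => Cmult al (f t)) a b = Cmult al (CI f a b).
Proof. intros H. unfold CI. apply (is_RInt_unique (V:=C_R_CompleteNormedModule)). apply is_RInt_Cmul. apply (RInt_correct (V:=C_R_CompleteNormedModule)). exact H. Qed.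

Lemma CI_plus (f g : R -> C) a b : ex_RInt (V:=C_R_NormedModule) f a b -> ex_RInt (V:=C_R_NormedModule) g a b ->
  CI (fun t => Cplus (f t) (g t)) a b = Cplus (CI f a b) (CI g a b).
Proof. intros H1 H2. unfold CI. apply (RInt_plus (V:=C_R_CompleteNormedModule)); auto. Qed.

Lemma ex_Cmul (f : R -> C) a b (al : C) : ex_RInt (V:=C_R_NormedModule) f a b ->
  ex_RInt (V:=C_R_NormedModule) (fun t => Cmult al (f t)) a b.
Proof. intros [l H]. exists (Cmult al l). apply is_RInt_Cmul. auto. Qed.

Lemma ex_Cplus (f g : R -> C) a b : ex_RInt (V:=C_R_NormedModule) f a b -> ex_RInt (V:=C_R_NormedModule) g a b ->
  ex_RInt (V:=C_R_NormedModule) (fun t => Cplus (f t) (g t)) a b.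
Proof. intros H1 H2. apply (ex_RInt_plus (V:=C_R_NormedModule)); auto. Qed.

Definition RI (F : C -> C) (a b c d : R) : C :=
  Cminus (Cminus (Cplus (CI (fun t => F (t, c)) a b) (Cmult Ci (CI (fun t => F (b, t)) c d)))
    (CI (fun t => F (t, d)) a b)) (Cmult Ci (CI (fun t => F (a, t)) c d)).

Definition crect (F : C -> C) (a b c d : R) : Prop :=
  forall x y, a <= x <= b -> c <= y <= d -> ccont F (x, y).

Lemma pairH (t c : R) : ((t, c) : C) = Cplus ((0%R, c) : C) (Cmult (RtoC t) (RtoC 1)).
Proof. unfold Cplus, Cmult, RtoC; simpl. f_equal; ring. Qed.
Lemma pairV (a t : R) : ((a, t) : C) = Cplus (RtoC a) (Cmult (RtoC t) Ci).
Proof. unfold Cplus, Cmult, RtoC, Ci; simpl. f_equal; ring. Qed.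

Lemma exH F a b c d y : crect F a b c d -> a <= b -> c <= y <= d ->
  ex_RInt (V:=C_R_NormedModule) (fun t => F (t, y)) a b.
Proof.
  intros H Hab Hy. apply (ex_RInt_continuous (V:=C_R_CompleteNormedModule)).
  intros z Hz. rewrite Rmin_left in Hz by lra. rewrite Rmax_right in Hz by lra.
  apply (continuous_ext (fun s => F (Cplus ((0%R, y) : C) (Cmult (RtoC s) (RtoC 1))))).
  { intros s. rewrite <- pairH. auto. }
  apply ccont_line. rewrite <- pairH. apply H; lra.
Qed.

Lemma exV F a b c d x : crect F a b c d -> c <= d -> a <= x <= b ->
  ex_RInt (V:=C_R_NormedModule) (fun t => F (x, t)) c d.
Proof.
  intros H Hab Hy. apply (ex_RInt_continuous (V:=C_R_CompleteNormedModule)).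
  intros z Hz. rewrite Rmin_left in Hz by lra. rewrite Rmax_right in Hz by lra.
  apply (continuous_ext (fun s => F (Cplus (RtoC x) (Cmult (RtoC s) Ci)))).
  { intros s. rewrite <- pairV. auto. }
  apply ccont_line. rewrite <- pairV. apply H; lra.
Qed.

Lemma CI_Chasles (f : R -> C) a m b : ex_RInt (V:=C_R_NormedModule) f a m -> ex_RInt (V:=C_R_NormedModule) f m b ->
  CI f a b = Cplus (CI f a m) (CI f m b).
Proof. intros H1 H2. unfold CI. symmetry. apply (RInt_Chasles (V:=C_R_CompleteNormedModule)); auto. Qed.

Lemma crect_sub F a b c d a' b' c' d' : crect F a b c d -> a <= a' -> b' <= b -> c <= c' -> d' <= d ->
  crect F a' b' c' d'.
Proof. intros H ? ? ? ? x y ? ?. apply H; lra. Qed.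

Lemma RI_splitx F a m b c d : crect F a b c d -> a <= m <= b -> c <= d ->
  RI F a b c d = Cplus (RI F a m c d) (RI F m b c d).
Proof.
  intros H Hm Hcd. unfold RI.
  rewrite (CI_Chasles (fun t => F (t, c)) a m b), (CI_Chasles (fun t => F (t, d)) a m b).
  - ring.
  all: apply (exH F _ _ c d); [eapply crect_sub; [exact H|..]; lra | lra | lra].
Qed.

Lemma RI_splity F a b c m d : crect F a b c d -> c <= m <= d -> a <= b ->
  RI F a b c d = Cplus (RI F a b c m) (RI F a b m d).
Proof.
  intros H Hm Hcd. unfold RI.
  rewrite (CI_Chasles (fun t => F (b, t)) c m d), (CI_Chasles (fun t => F (a, t)) c m d).
  - ring.
  all: apply (exV F a b _ _); [eapply crect_sub; [exact H|..]; lra | lra | lra].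
Qed.

Lemma RI_plus F G a b c d : crect F a b c d -> crect G a b c d -> a <= b -> c <= d ->
  RI (fun z => Cplus (F z) (G z)) a b c d = Cplus (RI F a b c d) (RI G a b c d).
Proof.
  intros HF HG Hab Hcd. unfold RI.
  rewrite !(CI_plus (fun t => F _) (fun t => G _)).
  - ring.
  all: first [apply (exH _ a b c d); auto; lra | apply (exV _ a b c d); auto; lra].
Qed.

Lemma RI_Cmul F al a b c d : crect F a b c d -> a <= b -> c <= d ->
  RI (fun z => Cmult al (F z)) a b c d = Cmult al (RI F a b c d).
Proof.
  intros HF Hab Hcd. unfold RI.
  rewrite !(CI_Cmul (fun t => F _)).
  - ring.
  all: first [apply (exH _ a b c d); auto; lra | apply (exV _ a b c d); auto; lra].
Qed.

Lemma CI_bound (f : R -> C) a b M : a <= b -> ex_RInt (V:=C_R_NormedModule) f a b ->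
  (forall t, a <= t <= b -> Cmod (f t) <= M) -> Cmod (CI f a b) <= (b - a) * M.
Proof.
  intros Hab Hex HM. rewrite <- norm_CR. unfold CI.
  apply (norm_RInt_le_const (V:=C_R_NormedModule) f a b); auto.
  intros t Ht. rewrite norm_CR. auto.
  apply (RInt_correct (V:=C_R_CompleteNormedModule)). auto.
Qed.

Lemma Cmod_Cminus_le (x y : C) : Cmod (Cminus x y) <= Cmod x + Cmod y.
Proof. unfold Cminus. eapply Rle_trans. apply Cmod_triangle. rewrite Cmod_opp. lra. Qed.

Lemma Cmod_Ci_mult (x : C) : Cmod (Cmult Ci x) = Cmod x.
Proof. rewrite Cmod_mult. replace (Cmod Ci) with 1. ring.
 unfold Cmod, Ci; simpl. rewrite <- sqrt_1 at 1. f_equal. simpl. ring. Qed.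

Lemma RI_bound F a b c d M : crect F a b c d -> a <= b -> c <= d ->
  (forall x y, a <= x <= b -> c <= y <= d -> Cmod (F (x, y)) <= M) ->
  Cmod (RI F a b c d) <= 2 * ((b - a) + (d - c)) * M.
Proof.
  intros HF Hab Hcd HM. unfold RI.
  assert (h1 : Cmod (CI (fun t => F (t, c)) a b) <= (b - a) * M).
  { apply CI_bound; auto. apply (exH _ a b c d); auto; lra. intros; apply HM; lra. }
  assert (h2 : Cmod (CI (fun t => F (t, d)) a b) <= (b - a) * M).
  { apply CI_bound; auto. apply (exH _ a b c d); auto; lra. intros; apply HM; lra. }
  assert (h3 : Cmod (CI (fun t => F (b, t)) c d) <= (d - c) * M).
  { apply CI_bound; auto. apply (exV _ a b c d); auto; lra. intros; apply HM; lra. }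
  assert (h4 : Cmod (CI (fun t => F (a, t)) c d) <= (d - c) * M).
  { apply CI_bound; auto. apply (exV _ a b c d); auto; lra. intros; apply HM; lra. }
  eapply Rle_trans. apply Cmod_Cminus_le. rewrite Cmod_Ci_mult.
  eapply Rle_trans. apply Rplus_le_compat_r. apply Cmod_Cminus_le.
  eapply Rle_trans. apply Rplus_le_compat_r. apply Rplus_le_compat_r. apply Cmod_triangle.
  rewrite Cmod_Ci_mult. lra.
Qed.

Lemma ccont_mulc G (v : C) z : ccont G z -> ccont (fun w => Cmult (G w) v) z.
Proof.
  intros H eps Heps. destruct (H (eps / (Cmod v + 1))) as [d [Hd H1]].
  { apply Rdiv_lt_0_compat; auto. pose proof (Cmod_ge_0 v); lra. }
  exists d. split; auto. intros w Hw. specialize (H1 w Hw).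
  replace (Cminus (Cmult (G w) v) (Cmult (G z) v)) with (Cmult (Cminus (G w) (G z)) v) by (unfold Cminus; ring).
  rewrite Cmod_mult. pose proof (Cmod_ge_0 v). pose proof (Cmod_ge_0 (Cminus (G w) (G z))).
  assert (Cmod (Cminus (G w) (G z)) * (Cmod v + 1) < eps).
  { apply Rmult_lt_reg_r with (/ (Cmod v + 1)). apply Rinv_0_lt_compat; lra.
    rewrite Rmult_assoc, Rinv_r by lra. rewrite Rmult_1_r. exact H1. }
  nra.
Qed.

Lemma CI_FTC Fp G (p v : C) a b : a <= b ->
  (forall t, a <= t <= b -> Dd Fp (Cplus p (Cmult (RtoC t) v)) (G (Cplus p (Cmult (RtoC t) v)))) ->
  (forall t, a <= t <= b -> ccont G (Cplus p (Cmult (RtoC t) v))) ->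
  CI (fun t => Cmult (G (Cplus p (Cmult (RtoC t) v))) v) a b =
  Cminus (Fp (Cplus p (Cmult (RtoC b) v))) (Fp (Cplus p (Cmult (RtoC a) v))).
Proof.
  intros Hab HD HC. unfold CI. apply (is_RInt_unique (V:=C_R_CompleteNormedModule)).
  apply (is_RInt_derive (V:=C_R_CompleteNormedModule) (fun s => Fp (Cplus p (Cmult (RtoC s) v)))).
  - intros x Hx. rewrite Rmin_left in Hx by lra. rewrite Rmax_right in Hx by lra.
    apply Rd_der. apply Dd_line. apply HD. auto.
  - intros x Hx. rewrite Rmin_left in Hx by lra. rewrite Rmax_right in Hx by lra.
    apply (ccont_line (fun w => Cmult (G w) v)). apply ccont_mulc. apply HC; auto.
Qed.

Lemma RI_exact Fp G a b c d : a <= b -> c <= d ->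
  (forall x y, a <= x <= b -> c <= y <= d -> Dd Fp (x, y) (G (x, y))) ->
  crect G a b c d -> RI G a b c d = RtoC 0.
Proof.
  intros Hab Hcd HD HC.
  assert (EH : forall y, c <= y <= d -> CI (fun t => G (t, y)) a b = Cminus (Fp (b, y)) (Fp (a, y))).
  { intros y Hy.
    transitivity (CI (fun t => Cmult (G (Cplus ((0%R, y) : C) (Cmult (RtoC t) (RtoC 1)))) (RtoC 1)) a b).
    { unfold CI. apply (RInt_ext (V:=C_R_CompleteNormedModule)). intros. rewrite <- pairH, Cmult_1_r. auto. }
    rewrite CI_FTC with (Fp := Fp); auto.
    - rewrite <- !pairH. auto.
    - intros t Ht. rewrite <- pairH. apply HD; lra.
    - intros t Ht. rewrite <- pairH. apply HC; lra. }
  assert (EV : forall x, a <= x <= b -> Cmult Ci (CI (fun t => G (x, t)) c d) = Cminus (Fp (x, d)) (Fp (x, c))).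
  { intros x Hx. rewrite <- CI_Cmul by (apply (exV _ a b c d); auto).
    transitivity (CI (fun t => Cmult (G (Cplus (RtoC x) (Cmult (RtoC t) Ci))) Ci) c d).
    { unfold CI. apply (RInt_ext (V:=C_R_CompleteNormedModule)). intros. rewrite <- pairV, Cmult_comm. auto. }
    rewrite CI_FTC with (Fp := Fp); auto.
    - rewrite <- !pairV. auto.
    - intros t Ht. rewrite <- pairV. apply HD; lra.
    - intros t Ht. rewrite <- pairV. apply HC; lra. }
  unfold RI. rewrite !EH, !EV by lra. ring.
Qed.

Lemma Cmod_le_sum (x y : R) : Cmod ((x, y) : C) <= Rabs x + Rabs y.
Proof.
  replace ((x, y) : C) with (Cplus (RtoC x) (Cmult Ci (RtoC y))) by (unfold Cplus, Cmult, Ci, RtoC; simpl; f_equal; ring).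
  eapply Rle_trans. apply Cmod_triangle. rewrite Cmod_Ci_mult, !Cmod_R. lra.
Qed.

Lemma Dd_affine (al be p : C) :
  Dd (fun z => Cplus (Cmult al z) (Cmult be (Cmult (Cmult z z) (Cinv (RtoC 2))))) p (Cplus al (Cmult be p)).
Proof.
  assert (H := Dd_plus _ _ p _ _ (Dd_mult _ _ p _ _ (Dd_const al p) (Dd_id p))
     (Dd_mult _ _ p _ _ (Dd_const be p) (Dd_mult _ _ p _ _ (Dd_mult _ _ p _ _ (Dd_id p) (Dd_id p)) (Dd_const (Cinv (RtoC 2)) p)))).
  simpl in H. replace (Cplus al (Cmult be p)) with
    (Cplus (Cplus (Cmult (RtoC 0) p) (Cmult al (RtoC 1)))
      (Cplus (Cmult (RtoC 0) (Cmult (Cmult p p) (Cinv (RtoC 2))))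
        (Cmult be (Cplus (Cmult (Cplus (Cmult (RtoC 1) p) (Cmult p (RtoC 1))) (Cinv (RtoC 2))) (Cmult (Cmult p p) (RtoC 0)))))).
  exact H.
  field.
Qed.

Lemma RI_affine (al be : C) a b c d : a <= b -> c <= d ->
  RI (fun z => Cplus al (Cmult be z)) a b c d = RtoC 0.
Proof.
  intros Hab Hcd. apply RI_exact with (Fp := fun z => Cplus (Cmult al z) (Cmult be (Cmult (Cmult z z) (Cinv (RtoC 2))))); auto.
  - intros. apply Dd_affine.
  - intros x y _ _. apply (Dd_ccont _ _ be).
    assert (H := Dd_plus _ _ (x,y) _ _ (Dd_const al (x,y)) (Dd_mult _ _ (x,y) _ _ (Dd_const be (x,y)) (Dd_id (x,y)))).
    eapply Dd_eqv. exact H. simpl. ring.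
Qed.

Lemma RI_ext F G a b c d : (forall z, F z = G z) -> RI F a b c d = RI G a b c d.
Proof. intros H. replace G with F. auto. apply functional_extensionality. auto. Qed.

Lemma Cmod_pt_rect (x y a b c d x0 y0 : R) : a <= x <= b -> c <= y <= d -> a <= x0 <= b -> c <= y0 <= d ->
  Cmod (Cminus (x, y) (x0, y0)) <= (b - a) + (d - c).
Proof.
  intros. replace (Cminus (x, y) (x0, y0)) with ((x - x0, y - y0)%R : C) by (unfold Cminus, Cplus, Copp; simpl; f_equal; ring).
  eapply Rle_trans. apply Cmod_le_sum. unfold Rabs. repeat destruct Rcase_abs; lra.
Qed.

Lemma two_pow_big K del : 0 < del -> exists n : nat, K < del * 2 ^ n.
Proof.
  intros Hd. destruct (archimed (K / del)) as [H1 _].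
  assert (Hn : (0 <= up (K / del))%Z \/ (up (K / del) < 0)%Z) by lia.
  exists (Z.to_nat (up (K / del))).
  assert (forall n : nat, INR n <= 2 ^ n).
  { induction n. simpl; lra. rewrite S_INR. simpl. assert (1 <= 2 ^ n) by (apply pow_R1_Rle; lra). lra. }
  assert (K / del < INR (Z.to_nat (up (K / del)))).
  { destruct Hn. rewrite INR_IZR_INZ, Z2Nat.id by auto. auto.
    apply Rlt_le_trans with 0. apply Rlt_trans with (IZR (up (K/del))); auto. apply IZR_lt. lia. apply pos_INR. }
  specialize (H (Z.to_nat (up (K / del)))).
  apply Rmult_lt_reg_r with (/ del). apply Rinv_0_lt_compat; auto.
  replace (del * 2 ^ Z.to_nat (up (K / del)) * / del) with (2 ^ Z.to_nat (up (K / del))) by (field; lra).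
  fold (K / del). lra.
Qed.

Record quad := Q { qa : R; qb : R; qc : R; qd : R }.
Definition RIq F (r : quad) := RI F (qa r) (qb r) (qc r) (qd r).
Definition mx F (r s : quad) := if Rle_dec (Cmod (RIq F s)) (Cmod (RIq F r)) then r else s.
Definition step F (r : quad) : quad :=
  let m := (qa r + qb r) / 2 in let n := (qc r + qd r) / 2 in
  mx F (mx F (Q (qa r) m (qc r) n) (Q m (qb r) (qc r) n)) (mx F (Q (qa r) m n (qd r)) (Q m (qb r) n (qd r))).
Fixpoint seqr F r n := match n with O => r | S k => step F (seqr F r k) end.

Lemma mx_cases F r s : mx F r s = r \/ mx F r s = s.
Proof. unfold mx. destruct Rle_dec; auto. Qed.
Lemma mx_ge_l F r s : Cmod (RIq F r) <= Cmod (RIq F (mx F r s)).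
Proof. unfold mx. destruct Rle_dec; lra. Qed.
Lemma mx_ge_r F r s : Cmod (RIq F s) <= Cmod (RIq F (mx F r s)).
Proof. unfold mx. destruct Rle_dec; lra. Qed.

Lemma step_shape F r : qa r <= qb r -> qc r <= qd r ->
  let r' := step F r in
  qa r <= qa r' /\ qb r' <= qb r /\ qb r' - qa r' = (qb r - qa r) / 2 /\
  qc r <= qc r' /\ qd r' <= qd r /\ qd r' - qc r' = (qd r - qc r) / 2.
Proof.
  intros H1 H2 r'. unfold r', step.
  destruct (mx_cases F (mx F (Q (qa r) ((qa r + qb r) / 2) (qc r) ((qc r + qd r) / 2)) (Q ((qa r + qb r) / 2) (qb r) (qc r) ((qc r + qd r) / 2)))
      (mx F (Q (qa r) ((qa r + qb r) / 2) ((qc r + qd r) / 2) (qd r)) (Q ((qa r + qb r) / 2) (qb r) ((qc r + qd r) / 2) (qd r)))) as [E|E];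
  rewrite E; [destruct (mx_cases F (Q (qa r) ((qa r + qb r) / 2) (qc r) ((qc r + qd r) / 2)) (Q ((qa r + qb r) / 2) (qb r) (qc r) ((qc r + qd r) / 2))) as [E'|E']
    | destruct (mx_cases F (Q (qa r) ((qa r + qb r) / 2) ((qc r + qd r) / 2) (qd r)) (Q ((qa r + qb r) / 2) (qb r) ((qc r + qd r) / 2) (qd r))) as [E'|E']];
  rewrite E'; simpl; lra.
Qed.

Lemma step_bound F r : qa r <= qb r -> qc r <= qd r -> crect F (qa r) (qb r) (qc r) (qd r) ->
  Cmod (RIq F r) <= 4 * Cmod (RIq F (step F r)).
Proof.
  intros H1 H2 HC. destruct r as [a b c d]; simpl in *.
  set (m := (a + b) / 2). set (n := (c + d) / 2).
  assert (E : RIq F (Q a b c d) = Cplus (Cplus (RIq F (Q a m c n)) (RIq F (Q a m n d))) (Cplus (RIq F (Q m b c n)) (RIq F (Q m b n d)))).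
  { unfold RIq; simpl. rewrite (RI_splitx F a m b c d) by (auto; unfold m; lra).
    rewrite (RI_splity F a m c n d), (RI_splity F m b c n d); auto; unfold m, n in *; try lra;
    (eapply crect_sub; [exact HC|..]; lra). }
  unfold step; simpl. fold m n.
  pose proof (mx_ge_l F (mx F (Q a m c n) (Q m b c n)) (mx F (Q a m n d) (Q m b n d))).
  pose proof (mx_ge_r F (mx F (Q a m c n) (Q m b c n)) (mx F (Q a m n d) (Q m b n d))).
  pose proof (mx_ge_l F (Q a m c n) (Q m b c n)). pose proof (mx_ge_r F (Q a m c n) (Q m b c n)).
  pose proof (mx_ge_l F (Q a m n d) (Q m b n d)). pose proof (mx_ge_r F (Q a m n d) (Q m b n d)).
  rewrite E. eapply Rle_trans. apply Cmod_triangle. eapply Rle_trans. apply Rplus_le_compat; apply Cmod_triangle.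
  lra.
Qed.

Lemma seq_props F a b c d n : a <= b -> c <= d ->
  let r := seqr F (Q a b c d) n in
  a <= qa r /\ qa r <= qb r /\ qb r <= b /\ c <= qc r /\ qc r <= qd r /\ qd r <= d /\
  qb r - qa r = (b - a) / 2 ^ n /\ qd r - qc r = (d - c) / 2 ^ n.
Proof.
  intros Hab Hcd. induction n; simpl.
  - unfold Rdiv. rewrite Rinv_1. lra.
  - destruct IHn as (h1 & h2 & h3 & h4 & h5 & h6 & h7 & h8).
    destruct (step_shape F (seqr F (Q a b c d) n) h2 h5) as (k1 & k2 & k3 & k4 & k5 & k6).
    assert (0 < 2 ^ n) by (apply pow_lt; lra).
    repeat split; try lra.
    rewrite k3, h7. field. lra. rewrite k6, h8. field. lra.
Qed.

Lemma seq_mono F a b c d n k : a <= b -> c <= d ->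
  qa (seqr F (Q a b c d) n) <= qa (seqr F (Q a b c d) (n + k)) /\
  qb (seqr F (Q a b c d) (n + k)) <= qb (seqr F (Q a b c d) n) /\
  qc (seqr F (Q a b c d) n) <= qc (seqr F (Q a b c d) (n + k)) /\
  qd (seqr F (Q a b c d) (n + k)) <= qd (seqr F (Q a b c d) n).
Proof.
  intros Hab Hcd. induction k.
  - rewrite Nat.add_0_r. lra.
  - rewrite Nat.add_succ_r. simpl.
    destruct (seq_props F a b c d (n + k) Hab Hcd) as (h1 & h2 & h3 & h4 & h5 & h6 & h7 & h8).
    destruct (step_shape F (seqr F (Q a b c d) (n + k)) h2 h5) as (k1 & k2 & k3 & k4 & k5 & k6).
    lra.
Qed.

Lemma seq_ab F a b c d n m : a <= b -> c <= d ->
  qa (seqr F (Q a b c d) n) <= qb (seqr F (Q a b c d) m) /\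
  qc (seqr F (Q a b c d) n) <= qd (seqr F (Q a b c d) m).
Proof.
  intros Hab Hcd. destruct (Nat.le_ge_cases n m) as [H|H].
  - destruct (Nat.le_exists_sub n m H) as [k [Hk _]]. rewrite Nat.add_comm in Hk. subst m.
    destruct (seq_mono F a b c d n k Hab Hcd).
    destruct (seq_props F a b c d (n + k) Hab Hcd) as (h1 & h2 & h3 & h4 & h5 & h6 & h7 & h8). lra.
  - destruct (Nat.le_exists_sub m n H) as [k [Hk _]]. rewrite Nat.add_comm in Hk. subst n.
    destruct (seq_mono F a b c d m k Hab Hcd).
    destruct (seq_props F a b c d (m + k) Hab Hcd) as (h1 & h2 & h3 & h4 & h5 & h6 & h7 & h8). lra.
Qed.

Lemma seq_bound F a b c d n : a <= b -> c <= d -> crect F a b c d ->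
  Cmod (RI F a b c d) <= 4 ^ n * Cmod (RIq F (seqr F (Q a b c d) n)).
Proof.
  intros Hab Hcd HC. induction n; simpl.
  - unfold RIq; simpl. lra.
  - destruct (seq_props F a b c d n Hab Hcd) as (h1 & h2 & h3 & h4 & h5 & h6 & h7 & h8).
    pose proof (step_bound F (seqr F (Q a b c d) n) h2 h5 ltac:(eapply crect_sub; [exact HC|..]; lra)).
    assert (0 < 4 ^ n) by (apply pow_lt; lra). nra.
Qed.

Lemma nested_point F a b c d : a <= b -> c <= d -> exists X Y, forall n,
  qa (seqr F (Q a b c d) n) <= X <= qb (seqr F (Q a b c d) n) /\
  qc (seqr F (Q a b c d) n) <= Y <= qd (seqr F (Q a b c d) n).
Proof.
  intros Hab Hcd.
  destruct (completeness (fun x => exists n, x = qa (seqr F (Q a b c d) n))) as [X [HX1 HX2]].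
  { exists b. intros x [n ->]. destruct (seq_props F a b c d n Hab Hcd) as (h1 & h2 & h3 & _). lra. }
  { exists a. exists O. auto. }
  destruct (completeness (fun x => exists n, x = qc (seqr F (Q a b c d) n))) as [Y [HY1 HY2]].
  { exists d. intros x [n ->]. destruct (seq_props F a b c d n Hab Hcd) as (h1 & h2 & h3 & h4 & h5 & h6 & _). lra. }
  { exists c. exists O. auto. }
  exists X, Y. intros n. split; split.
  - apply HX1. exists n; auto.
  - apply HX2. intros x [k ->]. apply (seq_ab F a b c d k n Hab Hcd).
  - apply HY1. exists n; auto.
  - apply HY2. intros x [k ->]. apply (seq_ab F a b c d k n Hab Hcd).
Qed.

Lemma Cmod_small_zero (z : C) K : 0 <= K -> (forall eps, 0 < eps -> Cmod z <= eps * K) -> z = RtoC 0.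
Proof.
  intros HK H. apply Cmod_eq_0. pose proof (Cmod_ge_0 z).
  destruct (Req_dec (Cmod z) 0) as [E|E]; auto. exfalso.
  specialize (H (Cmod z / (2 * (K + 1)))). 
  assert (0 < Cmod z / (2 * (K + 1))) by (apply Rdiv_lt_0_compat; lra).
  specialize (H H1). 
  assert (Cmod z / (2 * (K + 1)) * K < Cmod z).
  { unfold Rdiv. replace (Cmod z * / (2 * (K + 1)) * K) with (Cmod z * (K / (2 * (K + 1)))) by (field; lra).
    assert (K / (2 * (K+1)) < 1). { apply Rmult_lt_reg_r with (2 * (K+1)). lra. unfold Rdiv. rewrite Rmult_assoc, Rinv_l by lra. lra. }
    assert (0 < Cmod z) by lra. nra. }
  lra.
Qed.

Theorem goursat F a b c d : a <= b -> c <= d ->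
  (forall x y, a <= x <= b -> c <= y <= d -> exists l, Dd F (x, y) l) ->
  RI F a b c d = RtoC 0.
Proof.
  intros Hab Hcd HD.
  assert (HC : crect F a b c d) by (intros x y Hx Hy; destruct (HD x y Hx Hy) as [l Hl]; eapply Dd_ccont; eauto).
  destruct (nested_point F a b c d Hab Hcd) as [X [Y HXY]].
  destruct (HXY O) as [HX0 HY0]. simpl in HX0, HY0.
  destruct (HD X Y HX0 HY0) as [l Hl].
  set (S := (b - a) + (d - c)).
  apply Cmod_small_zero with (2 * S * S). unfold S; nra.
  intros eps Heps. destruct (Hl eps Heps) as [del [Hdel Hd]].
  destruct (two_pow_big S del Hdel) as [n Hn].
  set (r := seqr F (Q a b c d) n).
  destruct (seq_props F a b c d n Hab Hcd) as (h1 & h2 & h3 & h4 & h5 & h6 & h7 & h8). fold r in h1, h2, h3, h4, h5, h6, h7, h8.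
  destruct (HXY n) as [HXn HYn]. fold r in HXn, HYn.
  assert (Hp : 0 < 2 ^ n) by (apply pow_lt; lra).
  assert (HSn : (qb r - qa r) + (qd r - qc r) = S / 2 ^ n) by (rewrite h7, h8; unfold S; field; lra).
  assert (HSn2 : S / 2 ^ n < del) by (apply Rmult_lt_reg_r with (2 ^ n); auto; unfold Rdiv; rewrite Rmult_assoc, Rinv_l by lra; lra).
  set (A := fun z => Cplus (Cminus (F (X, Y)) (Cmult (X, Y) l)) (Cmult l z)).
  set (E := fun z => Cminus (F z) (A z)).
  assert (HCr : crect F (qa r) (qb r) (qc r) (qd r)) by (eapply crect_sub; [exact HC|..]; lra).
  assert (HCA : crect A (qa r) (qb r) (qc r) (qd r)).
  { intros x y _ _. apply (Dd_ccont _ _ l). unfold A.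
    eapply Dd_eqv. apply Dd_plus. apply Dd_const. apply Dd_mult. apply Dd_const. apply Dd_id. simpl. ring. }
  assert (HCE : crect E (qa r) (qb r) (qc r) (qd r)).
  { intros x y Hx Hy eps' Heps'. destruct (HCr x y Hx Hy (eps'/2)) as [d1 [Hd1 H1]]. lra.
    destruct (HCA x y Hx Hy (eps'/2)) as [d2 [Hd2 H2]]. lra.
    exists (Rmin d1 d2). split. apply Rmin_pos; auto. intros w Hw.
    specialize (H1 w (Rlt_le_trans _ _ _ Hw (Rmin_l _ _))). specialize (H2 w (Rlt_le_trans _ _ _ Hw (Rmin_r _ _))).
    unfold E. replace (Cminus (Cminus (F w) (A w)) (Cminus (F (x, y)) (A (x, y)))) with
      (Cminus (Cminus (F w) (F (x, y))) (Cminus (A w) (A (x, y)))) by ring.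
    eapply Rle_lt_trans. apply Cmod_Cminus_le. lra. }
  assert (ERI : RIq F r = RI E (qa r) (qb r) (qc r) (qd r)).
  { unfold RIq. transitivity (RI (fun z => Cplus (E z) (A z)) (qa r) (qb r) (qc r) (qd r)).
    apply RI_ext. intros z. unfold E. ring.
    rewrite RI_plus by auto. unfold A. rewrite RI_affine by auto. ring. }
  assert (HB : Cmod (RI E (qa r) (qb r) (qc r) (qd r)) <= 2 * ((qb r - qa r) + (qd r - qc r)) * (eps * (S / 2 ^ n))).
  { apply RI_bound; auto. intros x y Hx Hy.
    assert (Hm : Cmod (Cminus (x, y) (X, Y)) <= (qb r - qa r) + (qd r - qc r)) by (apply Cmod_pt_rect; lra).
    unfold E, A. replace (Cminus (F (x, y)) (Cplus (Cminus (F (X, Y)) (Cmult (X, Y) l)) (Cmult l (x, y))))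
      with (Cminus (Cminus (F (x, y)) (F (X, Y))) (Cmult (Cminus (x, y) (X, Y)) l)) by ring.
    eapply Rle_trans. apply Hd. lra. rewrite <- HSn. apply Rmult_le_compat_l; lra. }
  pose proof (seq_bound F a b c d n Hab Hcd HC). fold r in H.
  rewrite ERI in H. rewrite HSn in HB.
  assert (E4 : 4 ^ n = 2 ^ n * 2 ^ n) by (rewrite <- Rpow_mult_distr; f_equal; lra).
  assert (4 ^ n * (2 * (S / 2 ^ n) * (eps * (S / 2 ^ n))) = eps * (2 * S * S)) by (rewrite E4; field; lra).
  assert (0 < 4 ^ n) by (apply pow_lt; lra).
  nra.
Qed.

Lemma CI_point (f : R -> C) a : CI f a a = RtoC 0.
Proof. unfold CI. rewrite (RInt_point (V:=C_R_CompleteNormedModule)). reflexivity. Qed.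

Lemma RI_degx F a c d : RI F a a c d = RtoC 0.
Proof. unfold RI. rewrite !CI_point. ring. Qed.

Lemma RI_degy F a b c : RI F a b c c = RtoC 0.
Proof. unfold RI. rewrite !CI_point. ring. Qed.

Lemma RI_zero_piece F x1 x2 y1 y2 p1 p2 : x1 <= x2 -> y1 <= y2 ->
  (forall x y, x1 <= x <= x2 -> y1 <= y <= y2 -> ((x, y) : C) <> (p1, p2) -> exists l, Dd F (x, y) l) ->
  (x1 = x2 \/ y1 = y2 \/ p1 < x1 \/ x2 < p1 \/ p2 < y1 \/ y2 < p2) ->
  RI F x1 x2 y1 y2 = RtoC 0.
Proof.
  intros Hx Hy HD Hc. destruct Hc as [E|[E|Hc]].
  - subst. apply RI_degx.
  - subst. apply RI_degy.
  - apply goursat; auto. intros x y Hx' Hy'. apply HD; auto.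
    intros E. injection E. intros. subst. lra.
Qed.

Theorem goursat_exc F a b c d p1 p2 : a <= b -> c <= d -> crect F a b c d ->
  (forall x y, a <= x <= b -> c <= y <= d -> ((x, y) : C) <> (p1, p2) -> exists l, Dd F (x, y) l) ->
  RI F a b c d = RtoC 0.
Proof.
  intros Hab Hcd HC HD.
  destruct (Rle_dec a p1); [|apply (RI_zero_piece F a b c d p1 p2); auto; lra].
  destruct (Rle_dec p1 b); [|apply (RI_zero_piece F a b c d p1 p2); auto; lra].
  destruct (Rle_dec c p2); [|apply (RI_zero_piece F a b c d p1 p2); auto; lra].
  destruct (Rle_dec p2 d); [|apply (RI_zero_piece F a b c d p1 p2); auto; lra].
  destruct (HC p1 p2 ltac:(lra) ltac:(lra) 1 Rlt_0_1) as [d0 [Hd0 H0]].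
  set (M := Cmod (F (p1, p2)) + 1).
  assert (HM : 0 <= M) by (unfold M; pose proof (Cmod_ge_0 (F (p1, p2))); lra).
  apply Cmod_small_zero with (8 * M). lra.
  intros eps Heps. set (del := Rmin (d0 / 4) eps).
  assert (Hdel : 0 < del) by (apply Rmin_pos; lra).
  assert (Hdel1 : del <= d0 / 4) by apply Rmin_l. assert (Hdel2 : del <= eps) by apply Rmin_r.
  set (a' := Rmax a (p1 - del)). set (b' := Rmin b (p1 + del)).
  set (c' := Rmax c (p2 - del)). set (d' := Rmin d (p2 + del)).
  assert (Ha' : a <= a' <= p1) by (unfold a'; split; [apply Rmax_l | apply Rmax_lub; lra]).
  assert (Hb' : p1 <= b' <= b) by (unfold b'; split; [apply Rmin_glb; lra | apply Rmin_l]).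
  assert (Hc' : c <= c' <= p2) by (unfold c'; split; [apply Rmax_l | apply Rmax_lub; lra]).
  assert (Hd' : p2 <= d' <= d) by (unfold d'; split; [apply Rmin_glb; lra | apply Rmin_l]).
  assert (Ha'2 : a' = a \/ a' = p1 - del) by (unfold a', Rmax; destruct Rle_dec; auto).
  assert (Hb'2 : b' = b \/ b' = p1 + del) by (unfold b', Rmin; destruct Rle_dec; auto).
  assert (Hc'2 : c' = c \/ c' = p2 - del) by (unfold c', Rmax; destruct Rle_dec; auto).
  assert (Hd'2 : d' = d \/ d' = p2 + del) by (unfold d', Rmin; destruct Rle_dec; auto).
  assert (Hsub : forall x1 x2 y1 y2, a <= x1 -> x1 <= x2 -> x2 <= b -> c <= y1 -> y1 <= y2 -> y2 <= d ->
     (forall x y, x1 <= x <= x2 -> y1 <= y <= y2 -> ((x, y) : C) <> (p1, p2) -> exists l, Dd F (x, y) l)).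
  { intros. apply HD; auto; lra. }
  rewrite (RI_splitx F a a' b c d) by (auto; lra).
  rewrite (RI_zero_piece F a a' c d p1 p2) by first [lra | (apply Hsub; lra) | (destruct Ha'2; lra)].
  rewrite (RI_splitx F a' b' b c d) by first [lra | (eapply crect_sub; [exact HC|..]; lra)].
  rewrite (RI_zero_piece F b' b c d p1 p2) by first [lra | (apply Hsub; lra) | (destruct Hb'2; lra)].
  rewrite (RI_splity F a' b' c c' d) by first [lra | (eapply crect_sub; [exact HC|..]; lra)].
  rewrite (RI_zero_piece F a' b' c c' p1 p2) by first [lra | (apply Hsub; lra) | (destruct Hc'2; lra)].
  rewrite (RI_splity F a' b' c' d' d) by first [lra | (eapply crect_sub; [exact HC|..]; lra)].
  rewrite (RI_zero_piece F a' b' d' d p1 p2) by first [lra | (apply Hsub; lra) | (destruct Hd'2; lra)].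
  replace (Cplus (RtoC 0) (Cplus (Cplus (RtoC 0) (Cplus (RI F a' b' c' d') (RtoC 0))) (RtoC 0))) with (RI F a' b' c' d') by ring.
  eapply Rle_trans. apply (RI_bound F a' b' c' d' M).
  - eapply crect_sub; [exact HC|..]; lra.
  - lra.
  - lra.
  - intros x y Hx Hy. 
    assert (Hxy : Cmod (Cminus (x, y) (p1, p2)) < d0).
    { replace (Cminus (x, y) (p1, p2)) with ((x - p1, y - p2)%R : C) by (unfold Cminus, Cplus, Copp; simpl; f_equal; ring).
      eapply Rle_lt_trans. apply Cmod_le_sum.
      assert (a' >= p1 - del) by (unfold a'; apply Rle_ge, Rmax_r).
      assert (b' <= p1 + del) by (unfold b'; apply Rmin_r).
      assert (c' >= p2 - del) by (unfold c'; apply Rle_ge, Rmax_r).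
      assert (d' <= p2 + del) by (unfold d'; apply Rmin_r).
      unfold Rabs; repeat destruct Rcase_abs; lra. }
    specialize (H0 _ Hxy).
    replace (F (x, y)) with (Cplus (Cminus (F (x, y)) (F (p1, p2))) (F (p1, p2))) by ring.
    eapply Rle_trans. apply Cmod_triangle. unfold M. lra.
  - assert (b' - a' <= 2 * del) by (unfold a', b'; pose proof (Rmax_r a (p1 - del)); pose proof (Rmin_r b (p1 + del)); lra).
    assert (d' - c' <= 2 * del) by (unfold c', d'; pose proof (Rmax_r c (p2 - del)); pose proof (Rmin_r d (p2 + del)); lra).
    assert (2 * (b' - a' + (d' - c')) <= 8 * eps) by lra.
    assert (0 <= 2 * (b' - a' + (d' - c'))) by lra.
    nra.
Qed.

Definition onb (a b c d x y : R) : Prop :=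
  (a <= x <= b /\ (y = c \/ y = d)) \/ ((x = a \/ x = b) /\ c <= y <= d).

Definition bcont (F : C -> C) (a b c d : R) : Prop :=
  forall x y, onb a b c d x y -> ccont F (x, y).

Lemma crect_bcont F a b c d : a <= b -> c <= d -> crect F a b c d -> bcont F a b c d.
Proof. intros ? ? H x y Hb. apply H; unfold onb in Hb; destruct Hb as [[? [?|?]]|[[?|?] ?]]; subst; lra. Qed.

Lemma exH_b F a b c d y : bcont F a b c d -> a <= b -> c <= d -> (y = c \/ y = d) ->
  ex_RInt (V:=C_R_NormedModule) (fun t => F (t, y)) a b.
Proof.
  intros H Hab Hcd Hy. apply (ex_RInt_continuous (V:=C_R_CompleteNormedModule)).
  intros z Hz. rewrite Rmin_left in Hz by lra. rewrite Rmax_right in Hz by lra.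
  apply (continuous_ext (fun s => F (Cplus ((0%R, y) : C) (Cmult (RtoC s) (RtoC 1))))).
  { intros s. rewrite <- pairH. auto. }
  apply ccont_line. rewrite <- pairH. apply H. left; auto.
Qed.

Lemma exV_b F a b c d x : bcont F a b c d -> a <= b -> c <= d -> (x = a \/ x = b) ->
  ex_RInt (V:=C_R_NormedModule) (fun t => F (x, t)) c d.
Proof.
  intros H Hab Hcd Hy. apply (ex_RInt_continuous (V:=C_R_CompleteNormedModule)).
  intros z Hz. rewrite Rmin_left in Hz by lra. rewrite Rmax_right in Hz by lra.
  apply (continuous_ext (fun s => F (Cplus (RtoC x) (Cmult (RtoC s) Ci)))).
  { intros s. rewrite <- pairV. auto. }
  apply ccont_line. rewrite <- pairV. apply H. right; split; auto; lra.
Qed.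

Ltac exb := match goal with
 | |- ex_RInt (fun t => ?F (t, ?y)) ?a ?b => eapply (exH_b F a b _ _ y); [eassumption|lra|lra|tauto]
 | |- ex_RInt (fun t => ?F (?x, t)) ?c ?d => eapply (exV_b F _ _ c d x); [eassumption|lra|lra|tauto]
end.

Lemma RI_plus_b F G a b c d : bcont F a b c d -> bcont G a b c d -> a <= b -> c <= d ->
  RI (fun z => Cplus (F z) (G z)) a b c d = Cplus (RI F a b c d) (RI G a b c d).
Proof.
  intros HF HG Hab Hcd. unfold RI.
  rewrite !(CI_plus (fun t => F _) (fun t => G _)).
  - ring.
  all: exb.
Qed.

Lemma RI_Cmul_b F al a b c d : bcont F a b c d -> a <= b -> c <= d ->
  RI (fun z => Cmult al (F z)) a b c d = Cmult al (RI F a b c d).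
Proof.
  intros HF Hab Hcd. unfold RI.
  rewrite !(CI_Cmul (fun t => F _)).
  - ring.
  all: exb.
Qed.

Lemma RI_ext_b F G a b c d : a <= b -> c <= d -> (forall x y, onb a b c d x y -> F (x, y) = G (x, y)) ->
  RI F a b c d = RI G a b c d.
Proof.
  intros Hab Hcd H. unfold RI, CI.
  rewrite (RInt_ext (V:=C_R_CompleteNormedModule) (fun t => F (t, c)) (fun t => G (t, c))),
    (RInt_ext (V:=C_R_CompleteNormedModule) (fun t => F (t, d)) (fun t => G (t, d))),
    (RInt_ext (V:=C_R_CompleteNormedModule) (fun t => F (a, t)) (fun t => G (a, t))),
    (RInt_ext (V:=C_R_CompleteNormedModule) (fun t => F (b, t)) (fun t => G (b, t))); auto;
  intros t Ht; rewrite ?Rmin_left, ?Rmax_right in Ht by lra; apply H; unfold onb; lra.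
Qed.

Lemma RI_bound_b F a b c d M : bcont F a b c d -> a <= b -> c <= d ->
  (forall x y, onb a b c d x y -> Cmod (F (x, y)) <= M) ->
  Cmod (RI F a b c d) <= 2 * ((b - a) + (d - c)) * M.
Proof.
  intros HF Hab Hcd HM. unfold RI.
  assert (h1 : Cmod (CI (fun t => F (t, c)) a b) <= (b - a) * M).
  { apply CI_bound; auto. exb. intros; apply HM; unfold onb; lra. }
  assert (h2 : Cmod (CI (fun t => F (t, d)) a b) <= (b - a) * M).
  { apply CI_bound; auto. exb. intros; apply HM; unfold onb; lra. }
  assert (h3 : Cmod (CI (fun t => F (b, t)) c d) <= (d - c) * M).
  { apply CI_bound; auto. exb. intros; apply HM; unfold onb; lra. }
  assert (h4 : Cmod (CI (fun t => F (a, t)) c d) <= (d - c) * M).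
  { apply CI_bound; auto. exb. intros; apply HM; unfold onb; lra. }
  eapply Rle_trans. apply Cmod_Cminus_le. rewrite Cmod_Ci_mult.
  eapply Rle_trans. apply Rplus_le_compat_r. apply Cmod_Cminus_le.
  eapply Rle_trans. apply Rplus_le_compat_r. apply Rplus_le_compat_r. apply Cmod_triangle.
  rewrite Cmod_Ci_mult. lra.
Qed.

Lemma RI_exact_b Fp G a b c d : a <= b -> c <= d ->
  (forall x y, onb a b c d x y -> Dd Fp (x, y) (G (x, y))) ->
  bcont G a b c d -> RI G a b c d = RtoC 0.
Proof.
  intros Hab Hcd HD HC.
  assert (EH : forall y, (y = c \/ y = d) -> CI (fun t => G (t, y)) a b = Cminus (Fp (b, y)) (Fp (a, y))).
  { intros y Hy.
    transitivity (CI (fun t => Cmult (G (Cplus ((0%R, y) : C) (Cmult (RtoC t) (RtoC 1)))) (RtoC 1)) a b).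
    { unfold CI. apply (RInt_ext (V:=C_R_CompleteNormedModule)). intros. rewrite <- pairH, Cmult_1_r. auto. }
    rewrite CI_FTC with (Fp := Fp); auto.
    - rewrite <- !pairH. auto.
    - intros t Ht. rewrite <- pairH. apply HD; unfold onb; lra.
    - intros t Ht. rewrite <- pairH. apply HC; unfold onb; lra. }
  assert (EV : forall x, (x = a \/ x = b) -> Cmult Ci (CI (fun t => G (x, t)) c d) = Cminus (Fp (x, d)) (Fp (x, c))).
  { intros x Hx. rewrite <- CI_Cmul by exb.
    transitivity (CI (fun t => Cmult (G (Cplus (RtoC x) (Cmult (RtoC t) Ci))) Ci) c d).
    { unfold CI. apply (RInt_ext (V:=C_R_CompleteNormedModule)). intros. rewrite <- pairV, Cmult_comm. auto. }
    rewrite CI_FTC with (Fp := Fp); auto.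
    - rewrite <- !pairV. auto.
    - intros t Ht. rewrite <- pairV. apply HD; unfold onb; lra.
    - intros t Ht. rewrite <- pairV. apply HC; unfold onb; lra. }
  unfold RI. rewrite !EH, !EV by auto. ring.
Qed.

Lemma ccont_plus F G z : ccont F z -> ccont G z -> ccont (fun w => Cplus (F w) (G w)) z.
Proof.
  intros HF HG eps Heps. destruct (HF (eps/2)) as [d1 [Hd1 H1]]. lra. destruct (HG (eps/2)) as [d2 [Hd2 H2]]. lra.
  exists (Rmin d1 d2). split. apply Rmin_pos; auto. intros w Hw.
  specialize (H1 w (Rlt_le_trans _ _ _ Hw (Rmin_l _ _))). specialize (H2 w (Rlt_le_trans _ _ _ Hw (Rmin_r _ _))).
  replace (Cminus (Cplus (F w) (G w)) (Cplus (F z) (G z))) with (Cplus (Cminus (F w) (F z)) (Cminus (G w) (G z))) by ring.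
  eapply Rle_lt_trans. apply Cmod_triangle. lra.
Qed.

Lemma ccont_cmul F (al : C) z : ccont F z -> ccont (fun w => Cmult al (F w)) z.
Proof. intros H. apply (ccont_mulc F al z) in H. intros eps Heps. destruct (H eps Heps) as [d [Hd H1]].
 exists d; split; auto. intros w Hw. rewrite (Cmult_comm al (F w)), (Cmult_comm al (F z)). auto. Qed.

Lemma ccont_mult F G z : ccont F z -> ccont G z -> ccont (fun w => Cmult (F w) (G w)) z.
Proof.
  intros HF HG eps Heps.
  set (A := Cmod (F z) + 1). set (B := Cmod (G z) + 1).
  assert (HA : 1 <= A) by (unfold A; pose proof (Cmod_ge_0 (F z)); lra).
  assert (HB : 1 <= B) by (unfold B; pose proof (Cmod_ge_0 (G z)); lra).
  destruct (HF (eps / (2 * B))) as [d1 [Hd1 H1]]. apply Rdiv_lt_0_compat; lra.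
  destruct (HG (Rmin 1 (eps / (2 * A)))) as [d2 [Hd2 H2]]. apply Rmin_pos; [lra | apply Rdiv_lt_0_compat; lra].
  exists (Rmin d1 d2). split. apply Rmin_pos; auto. intros w Hw.
  specialize (H1 w (Rlt_le_trans _ _ _ Hw (Rmin_l _ _))). specialize (H2 w (Rlt_le_trans _ _ _ Hw (Rmin_r _ _))).
  replace (Cminus (Cmult (F w) (G w)) (Cmult (F z) (G z))) with
    (Cplus (Cmult (Cminus (F w) (F z)) (G w)) (Cmult (F z) (Cminus (G w) (G z)))) by ring.
  eapply Rle_lt_trans. apply Cmod_triangle. rewrite !Cmod_mult.
  assert (HGw : Cmod (G w) <= B).
  { replace (G w) with (Cplus (Cminus (G w) (G z)) (G z)) by ring. eapply Rle_trans. apply Cmod_triangle.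
    pose proof (Rmin_l 1 (eps / (2 * A))). unfold B. lra. }
  assert (h2 : Cmod (Cminus (G w) (G z)) < eps / (2 * A)) by (eapply Rlt_le_trans; [exact H2 | apply Rmin_r]).
  pose proof (Cmod_ge_0 (Cminus (F w) (F z))). pose proof (Cmod_ge_0 (Cminus (G w) (G z))). pose proof (Cmod_ge_0 (F z)).
  set (X := Cmod (Cminus (F w) (F z))) in *. set (W := Cmod (Cminus (G w) (G z))) in *.
  assert (XB : X * B < eps / 2).
  { apply Rmult_lt_reg_r with (/ B). apply Rinv_0_lt_compat; lra.
    replace (X * B * / B) with X by (field; lra). replace (eps / 2 * / B) with (eps / (2 * B)) by (field; lra). auto. }
  assert (AW : A * W < eps / 2).
  { apply Rmult_lt_reg_r with (/ A). apply Rinv_0_lt_compat; lra.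
    replace (A * W * / A) with W by (field; lra). replace (eps / 2 * / A) with (eps / (2 * A)) by (field; lra). auto. }
  assert (X * Cmod (G w) <= X * B) by (apply Rmult_le_compat_l; lra).
  assert (Cmod (F z) * W <= A * W) by (apply Rmult_le_compat_r; unfold A; lra).
  lra.
Qed.

Lemma bcont_plus F G a b c d : bcont F a b c d -> bcont G a b c d -> bcont (fun w => Cplus (F w) (G w)) a b c d.
Proof. intros H1 H2 x y H. apply ccont_plus; auto. Qed.
Lemma bcont_cmul F al a b c d : bcont F a b c d -> bcont (fun w => Cmult al (F w)) a b c d.
Proof. intros H1 x y H. apply ccont_cmul; auto. Qed.

Lemma kernel_diff (phi : C -> C) (K K1 : C -> C -> C) a b c d z r C0 Mp :
  a <= b -> c <= d -> 0 < r ->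
  (forall w, Cmod (Cminus w z) < r -> bcont (fun s => Cmult (phi s) (K s w)) a b c d) ->
  bcont (fun s => Cmult (phi s) (K1 s z)) a b c d ->
  (forall x y, onb a b c d x y -> Cmod (phi (x, y)) <= Mp) ->
  (forall w, Cmod (Cminus w z) < r -> forall x y, onb a b c d x y ->
     Cmod (Cminus (Cminus (K (x, y) w) (K (x, y) z)) (Cmult (Cminus w z) (K1 (x, y) z))) <= C0 * (Cmod (Cminus w z) * Cmod (Cminus w z))) ->
  Dd (fun w => RI (fun s => Cmult (phi s) (K s w)) a b c d) z (RI (fun s => Cmult (phi s) (K1 s z)) a b c d).
Proof.
  intros Hab Hcd Hr HCw HC1 HM HK eps Heps.
  set (S := (b - a) + (d - c)).
  set (Kc := 2 * S * Rabs Mp * Rabs C0).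
  assert (HKc : 0 <= Kc) by (unfold Kc, S; pose proof (Rabs_pos Mp); pose proof (Rabs_pos C0);
    apply Rmult_le_pos; [apply Rmult_le_pos|]; auto; apply Rmult_le_pos; lra).
  exists (Rmin r (eps / (Kc + 1))). split. apply Rmin_pos; auto. apply Rdiv_lt_0_compat; lra.
  intros w Hw. assert (Hwr : Cmod (Cminus w z) < r) by (eapply Rlt_le_trans; [exact Hw|apply Rmin_l]).
  assert (Hwe : Cmod (Cminus w z) < eps / (Kc + 1)) by (eapply Rlt_le_trans; [exact Hw|apply Rmin_r]).
  set (m := Cmod (Cminus w z)) in *. assert (Hm : 0 <= m) by apply Cmod_ge_0.
  assert (Hz : Cmod (Cminus z z) < r) by (unfold Cminus; rewrite Cplus_opp_r, Cmod_0; auto).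
  set (A := fun s => Cmult (phi s) (K s w)). set (B := fun s => Cmult (phi s) (K s z)).
  set (E := fun s => Cmult (phi s) (K1 s z)).
  assert (Em1 : RtoC (-1) = Copp (RtoC 1)) by (unfold RtoC, Copp; simpl; f_equal; ring).
  assert (EQ : Cminus (Cminus (RI A a b c d) (RI B a b c d)) (Cmult (Cminus w z) (RI E a b c d)) =
     RI (fun s => Cplus (Cplus (A s) (Cmult (RtoC (-1)) (B s))) (Cmult (Copp (Cminus w z)) (E s))) a b c d).
  { rewrite RI_plus_b, RI_plus_b, !RI_Cmul_b; auto.
    - rewrite Em1. ring.
    - apply HCw; auto.
    - apply HCw; auto.
    - apply bcont_cmul, HCw; auto.
    - apply bcont_plus. apply HCw; auto. apply bcont_cmul, HCw; auto.
    - apply bcont_cmul; auto. }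
  rewrite EQ.
  rewrite (RI_ext _ (fun s => Cmult (phi s) (Cminus (Cminus (K s w) (K s z)) (Cmult (Cminus w z) (K1 s z))))).
  2: { intros s. unfold A, B, E. rewrite Em1. ring. }
  eapply Rle_trans. apply RI_bound_b with (M := Rabs Mp * (Rabs C0 * (m * m))); auto.
  - replace (fun s => Cmult (phi s) (Cminus (Cminus (K s w) (K s z)) (Cmult (Cminus w z) (K1 s z)))) with
      (fun s => Cplus (Cplus (A s) (Cmult (RtoC (-1)) (B s))) (Cmult (Copp (Cminus w z)) (E s))).
    apply bcont_plus. apply bcont_plus. apply HCw; auto. apply bcont_cmul, HCw; auto. apply bcont_cmul; auto.
    apply functional_extensionality. intros s. unfold A, B, E. rewrite Em1. ring.
  - intros x y Hxy. rewrite Cmod_mult. apply Rmult_le_compat. apply Cmod_ge_0. apply Cmod_ge_0.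
    eapply Rle_trans. apply HM; auto. apply RRle_abs.
    eapply Rle_trans. apply HK; auto. apply Rmult_le_compat_r. nra. apply RRle_abs.
  - fold S. assert (Kc * m <= eps).
    { assert (Kc * m <= Kc * (eps / (Kc + 1))) by (apply Rmult_le_compat_l; lra).
      assert (Kc * (eps / (Kc + 1)) <= eps).
      { unfold Rdiv. replace (Kc * (eps * / (Kc + 1))) with (eps * (Kc / (Kc + 1))) by (field; lra).
        assert (Kc / (Kc + 1) <= 1). { apply Rmult_le_reg_r with (Kc + 1). lra. unfold Rdiv. rewrite Rmult_assoc, Rinv_l by lra. lra. }
        nra. }
      lra. }
    replace (2 * S * (Rabs Mp * (Rabs C0 * (m * m)))) with (Kc * m * m) by (unfold Kc; ring).
    nra.
Qed.

Lemma Cneq0 (a : C) : 0 < Cmod a -> a <> RtoC 0.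
Proof. intros H E. rewrite E, Cmod_0 in H. lra. Qed.

Lemma K1_bound (a h : C) rho : 0 < rho -> rho <= Cmod a -> Cmod h < rho / 2 ->
  Cmod (Cminus (Cminus (Cinv (Cminus a h)) (Cinv a)) (Cmult h (Cinv (Cmult a a)))) <= 2 / (rho * rho * rho) * (Cmod h * Cmod h).
Proof.
  intros Hr Ha Hh.
  assert (Hah : rho / 2 <= Cmod (Cminus a h)) by (pose proof (Cmod_minus_ge a h); lra).
  assert (a <> RtoC 0) by (apply Cneq0; lra). assert (Cminus a h <> RtoC 0) by (apply Cneq0; lra).
  replace (Cminus (Cminus (Cinv (Cminus a h)) (Cinv a)) (Cmult h (Cinv (Cmult a a)))) with
    (Cdiv (Cmult h h) (Cmult (Cmult a a) (Cminus a h))) by (field; auto).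
  unfold Cdiv. rewrite Cmod_mult, Cmod_inv, !Cmod_mult by (repeat apply Cmult_neq_0; auto).
  set (x := Cmod a) in *. set (y := Cmod (Cminus a h)) in *. set (m := Cmod h) in *.
  assert (0 <= m) by apply Cmod_ge_0.
  assert (P : rho * rho * (rho / 2) <= x * x * y).
  { apply Rmult_le_compat; try nra. }
  assert (0 < rho * rho * (rho / 2)) by (repeat apply Rmult_lt_0_compat; lra).
  replace (2 / (rho * rho * rho)) with (/ (rho * rho * (rho / 2))) by (field; lra).
  apply Rle_trans with (m * m * / (rho * rho * (rho / 2))).
  apply Rmult_le_compat_l. nra. apply Rinv_le_contravar; auto. right; ring.
Qed.

Lemma K2_bound (a h : C) rho : 0 < rho -> rho <= Cmod a -> Cmod h < rho / 2 ->
  Cmod (Cminus (Cminus (Cinv (Cmult (Cminus a h) (Cminus a h))) (Cinv (Cmult a a)))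
     (Cmult h (Cmult (RtoC 2) (Cinv (Cmult a (Cmult a a)))))) <= 16 / (rho * rho * rho * rho) * (Cmod h * Cmod h).
Proof.
  intros Hr Ha Hh.
  assert (Hah : rho / 2 <= Cmod (Cminus a h)) by (pose proof (Cmod_minus_ge a h); lra).
  assert (a <> RtoC 0) by (apply Cneq0; lra). assert (Cminus a h <> RtoC 0) by (apply Cneq0; lra).
  replace (Cminus (Cminus (Cinv (Cmult (Cminus a h) (Cminus a h))) (Cinv (Cmult a a)))
     (Cmult h (Cmult (RtoC 2) (Cinv (Cmult a (Cmult a a)))))) with
    (Cdiv (Cmult (Cmult h h) (Cminus (Cmult (RtoC 3) a) (Cmult (RtoC 2) h))) (Cmult (Cmult a (Cmult a a)) (Cmult (Cminus a h) (Cminus a h)))).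
  2: { field. auto. }
  unfold Cdiv. rewrite Cmod_mult, Cmod_inv, !Cmod_mult by (repeat apply Cmult_neq_0; auto).
  assert (Hn : Cmod (Cminus (Cmult (RtoC 3) a) (Cmult (RtoC 2) h)) <= 4 * Cmod a).
  { eapply Rle_trans. apply Cmod_Cminus_le. rewrite !Cmod_mult, !Cmod_R. rewrite !Rabs_pos_eq by lra. lra. }
  set (x := Cmod a) in *. set (y := Cmod (Cminus a h)) in *. set (m := Cmod h) in *.
  set (n := Cmod (Cminus (Cmult (RtoC 3) a) (Cmult (RtoC 2) h))) in *.
  assert (0 <= m) by apply Cmod_ge_0. assert (0 <= n) by apply Cmod_ge_0.
  assert (0 < x) by lra. assert (0 < y) by lra.
  assert (Q : m * m * n * / (x * (x * x) * (y * y)) <= m * m * (4 * x) * / (x * (x * x) * (y * y))).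
  { apply Rmult_le_compat_r. left; apply Rinv_0_lt_compat; repeat apply Rmult_lt_0_compat; lra. apply Rmult_le_compat_l; nra. }
  eapply Rle_trans. apply Q.
  replace (m * m * (4 * x) * / (x * (x * x) * (y * y))) with (m * m * (4 * / (x * x * (y * y)))) by (field; lra).
  replace (16 / (rho * rho * rho * rho) * (m * m)) with (m * m * (4 * / (rho * rho * ((rho/2) * (rho/2))))) by (field; lra).
  apply Rmult_le_compat_l. nra. apply Rmult_le_compat_l. lra.
  apply Rinv_le_contravar. assert (0 < rho * rho) by nra. assert (0 < (rho/2) * (rho/2)) by nra. nra.
  apply Rmult_le_compat; nra.
Qed.

Lemma Cmod_diff_le (u v : C) : Rabs (Cmod u - Cmod v) <= Cmod (Cminus u v).
Proof.
  pose proof (Cmod_minus_ge u v). pose proof (Cmod_minus_ge v u).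
  assert (Cminus v u = Copp (Cminus u v)) as E by ring. rewrite E, Cmod_opp in H0.
  unfold Rabs; destruct Rcase_abs; lra.
Qed.

Lemma ccont_line_pt F p v t : ccont F (Cplus p (Cmult (RtoC t) v)) ->
  continuity_pt (fun s => Cmod (F (Cplus p (Cmult (RtoC s) v)))) t.
Proof.
  intros H eps Heps. set (k := Cmod v + 1).
  assert (Hk : 0 < k) by (unfold k; pose proof (Cmod_ge_0 v); lra).
  destruct (H eps Heps) as [d [Hd H1]].
  exists (d / k). split. apply Rdiv_lt_0_compat; auto.
  intros s [_ Hs]. unfold R_dist in *. simpl in *. unfold R_dist in Hs.
  eapply Rle_lt_trans. apply Cmod_diff_le. apply H1.
  assert (E : Cminus (Cplus p (Cmult (RtoC s) v)) (Cplus p (Cmult (RtoC t) v)) = Cmult (RtoC (s - t)) v).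
  { unfold Cminus. rewrite RtoC_minus. ring. }
  rewrite E, Cmod_mult, Cmod_R.
  pose proof (Cmod_ge_0 v). pose proof (Rabs_pos (s - t)).
  assert (Hlt : Rabs (s - t) * k < d). { apply Rmult_lt_reg_r with (/k). apply Rinv_0_lt_compat; auto.
      rewrite Rmult_assoc, Rinv_r by lra. rewrite Rmult_1_r. exact Hs. }
  unfold k in Hlt. nra.
Qed.

Lemma line_bound F p v a b : a <= b -> (forall t, a <= t <= b -> ccont F (Cplus p (Cmult (RtoC t) v))) ->
  exists M, forall t, a <= t <= b -> Cmod (F (Cplus p (Cmult (RtoC t) v))) <= M.
Proof.
  intros Hab H. destruct (continuity_ab_maj (fun s => Cmod (F (Cplus p (Cmult (RtoC s) v)))) a b Hab) as [Mx [HM _]].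
  intros c Hc. apply ccont_line_pt. apply H; auto.
  exists (Cmod (F (Cplus p (Cmult (RtoC Mx) v)))). auto.
Qed.

Lemma bcont_bound F a b c d : a <= b -> c <= d -> bcont F a b c d ->
  exists M, forall x y, onb a b c d x y -> Cmod (F (x, y)) <= M.
Proof.
  intros Hab Hcd H.
  destruct (line_bound F ((0%R, c) : C) (RtoC 1) a b Hab) as [M1 H1].
  { intros t Ht. rewrite <- pairH. apply H. unfold onb; lra. }
  destruct (line_bound F ((0%R, d) : C) (RtoC 1) a b Hab) as [M2 H2].
  { intros t Ht. rewrite <- pairH. apply H. unfold onb; lra. }
  destruct (line_bound F (RtoC a) Ci c d Hcd) as [M3 H3].
  { intros t Ht. rewrite <- pairV. apply H. unfold onb; lra. }
  destruct (line_bound F (RtoC b) Ci c d Hcd) as [M4 H4].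
  { intros t Ht. rewrite <- pairV. apply H. unfold onb; lra. }
  exists (Rmax (Rmax M1 M2) (Rmax M3 M4)). intros x y Hxy.
  pose proof (Rmax_l M1 M2). pose proof (Rmax_r M1 M2). pose proof (Rmax_l M3 M4). pose proof (Rmax_r M3 M4).
  pose proof (Rmax_l (Rmax M1 M2) (Rmax M3 M4)). pose proof (Rmax_r (Rmax M1 M2) (Rmax M3 M4)).
  unfold onb in Hxy. destruct Hxy as [[Hx [E|E]]|[[E|E] Hy]]; subst.
  - specialize (H1 x Hx). rewrite <- pairH in H1. lra.
  - specialize (H2 x Hx). rewrite <- pairH in H2. lra.
  - specialize (H3 y Hy). rewrite <- pairV in H3. lra.
  - specialize (H4 y Hy). rewrite <- pairV in H4. lra.
Qed.

Definition inner (x0 y0 rho : R) (z : C) : Prop := Rabs (fst z - x0) < rho / 2 /\ Rabs (snd z - y0) < rho / 2.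

Lemma bd_dist x0 y0 rho z x y : 0 < rho -> inner x0 y0 rho z -> onb (x0 - rho) (x0 + rho) (y0 - rho) (y0 + rho) x y ->
  rho / 2 <= Cmod (Cminus (x, y) z).
Proof.
  intros Hr [Hz1 Hz2] Hb. eapply Rle_trans. 2: apply Rmax_Cmod.
  destruct z as [z1 z2]; simpl in Hz1, Hz2.
  replace (Cminus (x, y) (z1, z2)) with ((x - z1, y - z2)%R : C) by (unfold Cminus, Cplus, Copp; simpl; f_equal; ring).
  simpl. unfold onb in Hb.
  revert Hz1 Hz2. unfold Rabs. unfold Rmax. repeat destruct Rcase_abs; repeat destruct Rle_dec; intros; lra.
Qed.

Definition K1 (s w : C) : C := Cinv (Cminus s w).
Definition K2 (s w : C) : C := Cinv (Cmult (Cminus s w) (Cminus s w)).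
Definition K3 (s w : C) : C := Cmult (RtoC 2) (Cinv (Cmult (Cminus s w) (Cmult (Cminus s w) (Cminus s w)))).

Lemma Cminus_neq (s w : C) : s <> w -> Cminus s w <> RtoC 0.
Proof. intros H E. apply H. replace s with (Cplus (Cminus s w) w) by ring. rewrite E. ring. Qed.

Lemma Dd_sub w s : Dd (fun s => Cminus s w) s (RtoC 1).
Proof. eapply Dd_eqv. apply Dd_minus. apply Dd_id. apply Dd_const. ring. Qed.

Lemma ccont_K1 s w : s <> w -> ccont (fun s => K1 s w) s.
Proof. intros H. eapply Dd_ccont. unfold K1. apply Dd_inv. apply Dd_sub. apply Cminus_neq; auto. Qed.

Lemma ccont_K2 s w : s <> w -> ccont (fun s => K2 s w) s.
Proof. intros H. eapply Dd_ccont. unfold K2. apply Dd_inv. apply Dd_mult; apply Dd_sub.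
 apply Cmult_neq_0; apply Cminus_neq; auto. Qed.

Lemma Cmod_pos_neq (s w : C) : 0 < Cmod (Cminus s w) -> s <> w.
Proof. intros H E. subst. unfold Cminus in H. rewrite Cplus_opp_r, Cmod_0 in H. lra. Qed.

Lemma near_neq x0 y0 rho z w x y : 0 < rho -> inner x0 y0 rho z -> onb (x0 - rho) (x0 + rho) (y0 - rho) (y0 + rho) x y ->
  Cmod (Cminus w z) < rho / 4 -> ((x, y) : C) <> w.
Proof.
  intros Hr Hz Hb Hw. apply Cmod_pos_neq. pose proof (bd_dist x0 y0 rho z x y Hr Hz Hb).
  pose proof (Cmod_minus_ge (Cminus (x, y) z) (Cminus w z)).
  replace (Cminus (Cminus (x, y) z) (Cminus w z)) with (Cminus (x, y) w) in H0 by ring. lra.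
Qed.

Lemma Gdiff1 phi x0 y0 rho z : 0 < rho -> bcont phi (x0 - rho) (x0 + rho) (y0 - rho) (y0 + rho) -> inner x0 y0 rho z ->
  Dd (fun w => RI (fun s => Cmult (phi s) (K1 s w)) (x0 - rho) (x0 + rho) (y0 - rho) (y0 + rho)) z
     (RI (fun s => Cmult (phi s) (K2 s z)) (x0 - rho) (x0 + rho) (y0 - rho) (y0 + rho)).
Proof.
  intros Hr Hphi Hz.
  destruct (bcont_bound phi (x0 - rho) (x0 + rho) (y0 - rho) (y0 + rho)) as [M HM]; try lra; auto.
  apply kernel_diff with (r := rho / 4) (C0 := 2 / ((rho/2) * (rho/2) * (rho/2))) (Mp := M); auto; try lra.
  - intros w Hw x y Hb. apply ccont_mult. apply Hphi; auto. apply ccont_K1. eapply near_neq; eauto.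
  - intros x y Hb. apply ccont_mult. apply Hphi; auto. apply ccont_K2. eapply near_neq; eauto.
    unfold Cminus. rewrite Cplus_opp_r, Cmod_0. lra.
  - intros w Hw x y Hb. unfold K1, K2.
    replace (Cminus (x, y) w) with (Cminus (Cminus (x, y) z) (Cminus w z)) by ring.
    apply K1_bound. lra. eapply bd_dist; eauto. lra.
Qed.

Lemma Gdiff2 phi x0 y0 rho z : 0 < rho -> bcont phi (x0 - rho) (x0 + rho) (y0 - rho) (y0 + rho) -> inner x0 y0 rho z ->
  Dd (fun w => RI (fun s => Cmult (phi s) (K2 s w)) (x0 - rho) (x0 + rho) (y0 - rho) (y0 + rho)) z
     (RI (fun s => Cmult (phi s) (K3 s z)) (x0 - rho) (x0 + rho) (y0 - rho) (y0 + rho)).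
Proof.
  intros Hr Hphi Hz.
  destruct (bcont_bound phi (x0 - rho) (x0 + rho) (y0 - rho) (y0 + rho)) as [M HM]; try lra; auto.
  apply kernel_diff with (r := rho / 4) (C0 := 16 / ((rho/2) * (rho/2) * (rho/2) * (rho/2))) (Mp := M); auto; try lra.
  - intros w Hw x y Hb. apply ccont_mult. apply Hphi; auto. apply ccont_K2. eapply near_neq; eauto.
  - intros x y Hb. apply ccont_mult. apply Hphi; auto. eapply Dd_ccont. unfold K3. apply Dd_mult. apply Dd_const.
    apply Dd_inv. apply Dd_mult. apply Dd_sub. apply Dd_mult; apply Dd_sub.
    assert (Hn : ((x, y) : C) <> z). { eapply near_neq; eauto. unfold Cminus. rewrite Cplus_opp_r, Cmod_0. lra. }
    repeat apply Cmult_neq_0; apply Cminus_neq; auto.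
  - intros w Hw x y Hb. unfold K2, K3.
    replace (Cminus (x, y) w) with (Cminus (Cminus (x, y) z) (Cminus w z)) by ring.
    apply K2_bound. lra. eapply bd_dist; eauto. lra.
Qed.

Lemma inner_in x0 y0 rho z : inner x0 y0 rho z -> x0 - rho <= fst z <= x0 + rho /\ y0 - rho <= snd z <= y0 + rho.
Proof. intros [H1 H2]. revert H1 H2. unfold Rabs. repeat destruct Rcase_abs; intros; lra. Qed.

Lemma onb_neq x0 y0 rho z x y : 0 < rho -> inner x0 y0 rho z -> onb (x0 - rho) (x0 + rho) (y0 - rho) (y0 + rho) x y ->
  ((x, y) : C) <> z.
Proof. intros. apply Cmod_pos_neq. pose proof (bd_dist x0 y0 rho z x y H H0 H1). lra. Qed.

Lemma cauchy_id f x0 y0 rho z : 0 < rho ->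
  (forall x y, x0 - rho <= x <= x0 + rho -> y0 - rho <= y <= y0 + rho -> exists l, Dd f (x, y) l) ->
  inner x0 y0 rho z ->
  RI (fun s => Cmult (f s) (K1 s z)) (x0 - rho) (x0 + rho) (y0 - rho) (y0 + rho) =
  Cmult (f z) (RI (fun s => K1 s z) (x0 - rho) (x0 + rho) (y0 - rho) (y0 + rho)).
Proof.
  intros Hr HD Hz.
  destruct (inner_in _ _ _ _ Hz) as [Hz1 Hz2].
  destruct z as [z1 z2]. simpl in Hz1, Hz2.
  destruct (HD z1 z2 Hz1 Hz2) as [l Hl].
  set (z := ((z1, z2) : C)) in *.
  set (q := fun s => if excluded_middle_informative (s = z) then l else Cmult (Cminus (f s) (f z)) (K1 s z)).
  assert (Hq1 : forall s, s <> z -> q s = Cmult (Cminus (f s) (f z)) (K1 s z)).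
  { intros s Hs. unfold q. destruct excluded_middle_informative; tauto. }
  assert (Hqz : q z = l) by (unfold q; destruct excluded_middle_informative; tauto).
  assert (HDq : forall x y, x0 - rho <= x <= x0 + rho -> y0 - rho <= y <= y0 + rho -> ((x, y) : C) <> z ->
     exists l', Dd q (x, y) l').
  { intros x y Hx Hy Hn. destruct (HD x y Hx Hy) as [lf Hf].
    eexists. apply Dd_loc with (f := fun s => Cmult (Cminus (f s) (f z)) (K1 s z)) (r := Cmod (Cminus (x, y) z)).
    apply Cmod_gt_0. apply Cminus_neq; auto.
    intros w Hw. rewrite Hq1; auto. intros E. subst w.
    replace (Cminus z (x, y)) with (Copp (Cminus (x, y) z)) in Hw by ring. rewrite Cmod_opp in Hw. lra.
    apply Dd_mult. eapply Dd_eqv. apply Dd_minus. apply Hf. apply Dd_const. reflexivity.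
    unfold K1. apply Dd_inv. apply Dd_sub. apply Cminus_neq; auto. }
  assert (HCq : crect q (x0 - rho) (x0 + rho) (y0 - rho) (y0 + rho)).
  { intros x y Hx Hy. destruct (excluded_middle_informative (((x, y) : C) = z)) as [E|E].
    - rewrite E. intros eps Heps. destruct (Hl (eps / 2)) as [d [Hd H1]]. lra.
      exists d. split; auto. intros w Hw. rewrite Hqz.
      destruct (excluded_middle_informative (w = z)) as [E'|E'].
      + subst w. rewrite Hqz. unfold Cminus. rewrite Cplus_opp_r, Cmod_0. lra.
      + rewrite Hq1 by auto. specialize (H1 w Hw).
        assert (Hwz : Cminus w z <> RtoC 0) by (apply Cminus_neq; auto).
        unfold K1. replace (Cminus (Cmult (Cminus (f w) (f z)) (Cinv (Cminus w z))) l) with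
          (Cmult (Cminus (Cminus (f w) (f z)) (Cmult (Cminus w z) l)) (Cinv (Cminus w z))) by (field; auto).
        rewrite Cmod_mult, Cmod_inv by auto.
        assert (0 < Cmod (Cminus w z)) by (apply Cmod_gt_0; auto).
        apply Rle_lt_trans with (eps / 2). 
        apply Rmult_le_reg_r with (Cmod (Cminus w z)); auto. rewrite Rmult_assoc, Rinv_l by lra. lra. lra.
    - destruct (HDq x y Hx Hy E) as [l' Hl']. eapply Dd_ccont; eauto. }
  assert (H0 : RI q (x0 - rho) (x0 + rho) (y0 - rho) (y0 + rho) = RtoC 0).
  { apply (goursat_exc q _ _ _ _ z1 z2); try lra; auto. }
  assert (HbK : bcont (fun s => K1 s z) (x0 - rho) (x0 + rho) (y0 - rho) (y0 + rho)).
  { intros x y Hb. apply ccont_K1. eapply onb_neq; eauto. }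
  assert (HbfK : bcont (fun s => Cmult (f s) (K1 s z)) (x0 - rho) (x0 + rho) (y0 - rho) (y0 + rho)).
  { intros x y Hb. apply ccont_mult; auto.
    assert (x0 - rho <= x <= x0 + rho /\ y0 - rho <= y <= y0 + rho) as [Hx Hy] by (unfold onb in Hb; lra).
    destruct (HD x y Hx Hy) as [lf Hf]. eapply Dd_ccont; eauto. }
  rewrite (RI_ext_b q (fun s => Cplus (Cmult (f s) (K1 s z)) (Cmult (Copp (f z)) (K1 s z)))) in H0.
  2,3: lra.
  2: { intros x y Hb. rewrite Hq1. ring. eapply onb_neq; eauto. }
  rewrite RI_plus_b, RI_Cmul_b in H0; auto; try lra.
  2: apply bcont_cmul; auto.
  replace (RI (fun s => Cmult (f s) (K1 s z)) (x0 - rho) (x0 + rho) (y0 - rho) (y0 + rho)) with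
    (Cminus (Cplus (RI (fun s => Cmult (f s) (K1 s z)) (x0 - rho) (x0 + rho) (y0 - rho) (y0 + rho))
       (Cmult (Copp (f z)) (RI (fun s => K1 s z) (x0 - rho) (x0 + rho) (y0 - rho) (y0 + rho))))
      (Cmult (Copp (f z)) (RI (fun s => K1 s z) (x0 - rho) (x0 + rho) (y0 - rho) (y0 + rho)))) by ring.
  rewrite H0. ring.
Qed.

Lemma const_segment F (p v : C) : (forall t, 0 <= t <= 1 -> Dd F (Cplus p (Cmult (RtoC t) v)) (RtoC 0)) ->
  F (Cplus p v) = F p.
Proof.
  intros H.
  assert (HI : @is_RInt C_R_NormedModule (fun _ => Cmult (RtoC 0) v) 0 1
     (minus (F (Cplus p (Cmult (RtoC 1) v))) (F (Cplus p (Cmult (RtoC 0) v))))).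
  { apply (is_RInt_derive (V:=C_R_CompleteNormedModule) (fun s => F (Cplus p (Cmult (RtoC s) v)))).
    - intros x Hx. rewrite Rmin_left in Hx by lra. rewrite Rmax_right in Hx by lra.
      apply Rd_der. apply Dd_line. apply H; auto.
    - intros x _. apply continuous_const. }
  pose proof (is_RInt_const (V:=C_R_NormedModule) 0 1 (Cmult (RtoC 0) v)) as HC.
  pose proof (is_RInt_unique (V:=C_R_CompleteNormedModule) _ _ _ _ HI) as E1.
  pose proof (is_RInt_unique (V:=C_R_CompleteNormedModule) _ _ _ _ HC) as E2.
  rewrite E1 in E2. rewrite scal_CR in E2.
  replace (Cmult (RtoC (1 - 0)) (Cmult (RtoC 0) v)) with (RtoC 0) in E2 by (rewrite Rminus_0_r; ring).
  replace (Cplus p (Cmult (RtoC 1) v)) with (Cplus p v) in E2 by ring.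
  replace (Cplus p (Cmult (RtoC 0) v)) with p in E2 by ring.
  change (Cminus (F (Cplus p v)) (F p) = RtoC 0) in E2.
  replace (F (Cplus p v)) with (Cplus (Cminus (F (Cplus p v)) (F p)) (F p)) by ring.
  rewrite E2. ring.
Qed.

Lemma cK_deriv x0 y0 rho z : 0 < rho -> inner x0 y0 rho z ->
  Dd (fun w => RI (fun s => K1 s w) (x0 - rho) (x0 + rho) (y0 - rho) (y0 + rho)) z (RtoC 0).
Proof.
  intros Hr Hz.
  assert (Hb1 : bcont (fun _ => RtoC 1) (x0 - rho) (x0 + rho) (y0 - rho) (y0 + rho)).
  { intros x y _. apply (Dd_ccont _ _ (RtoC 0)). apply Dd_const. }
  pose proof (Gdiff1 (fun _ => RtoC 1) x0 y0 rho z Hr Hb1 Hz) as H.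
  eapply Dd_eqv. eapply Dd_ext. exact H. intros w. simpl. apply RI_ext. intros s. ring.
  apply RI_exact_b with (Fp := fun s => Cminus (RtoC 0) (K1 s z)); try lra.
  - intros x y Hb. assert (Hn : ((x, y) : C) <> z) by (eapply onb_neq; eauto).
    eapply Dd_eqv. apply Dd_minus. apply Dd_const. unfold K1. apply Dd_inv. apply Dd_sub. apply Cminus_neq; auto.
    unfold K2. field. apply Cminus_neq; auto.
  - intros x y Hb. apply ccont_cmul. apply ccont_K2. eapply onb_neq; eauto.
Qed.

Lemma c_const x0 y0 rho z : 0 < rho -> inner x0 y0 rho z ->
  RI (fun s => K1 s z) (x0 - rho) (x0 + rho) (y0 - rho) (y0 + rho) =
  RI (fun s => K1 s (x0, y0)) (x0 - rho) (x0 + rho) (y0 - rho) (y0 + rho).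
Proof.
  intros Hr Hz.
  assert (E : Cplus (x0, y0) (Cminus z (x0, y0)) = z) by ring.
  pose proof (const_segment (fun w => RI (fun s => K1 s w) (x0 - rho) (x0 + rho) (y0 - rho) (y0 + rho)) (x0, y0) (Cminus z (x0, y0))) as H.
  rewrite E in H. apply H. clear H E.
  intros t Ht. apply cK_deriv; auto.
  destruct z as [z1 z2]. destruct Hz as [H1 H2]. simpl in H1, H2. unfold inner.
  replace (Cplus (x0, y0) (Cmult (RtoC t) (Cminus (z1, z2) (x0, y0)))) with ((x0 + t * (z1 - x0), y0 + t * (z2 - y0))%R : C)
    by (unfold Cplus, Cmult, Cminus, Copp, RtoC; simpl; f_equal; ring).
  simpl. split.
  - replace (x0 + t * (z1 - x0) - x0) with (t * (z1 - x0)) by ring.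
    rewrite Rabs_mult, (Rabs_pos_eq t) by lra. pose proof (Rabs_pos (z1 - x0)). nra.
  - replace (y0 + t * (z2 - y0) - y0) with (t * (z2 - y0)) by ring.
    rewrite Rabs_mult, (Rabs_pos_eq t) by lra. pose proof (Rabs_pos (z2 - y0)). nra.
Qed.

Lemma Im_CI f a b : ex_RInt (V:=C_R_NormedModule) f a b -> Im (CI f a b) = RInt (fun t => Im (f t)) a b.
Proof. intros H. unfold CI. symmetry. apply is_RInt_unique.
 apply (is_RInt_fct_extend_snd (U:=R_NormedModule) (V:=R_NormedModule)).
 apply (RInt_correct (V:=C_R_CompleteNormedModule)). auto. Qed.

Lemma Re_CI f a b : ex_RInt (V:=C_R_NormedModule) f a b -> Re (CI f a b) = RInt (fun t => Re (f t)) a b.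
Proof. intros H. unfold CI. symmetry. apply is_RInt_unique.
 apply (is_RInt_fct_extend_fst (U:=R_NormedModule) (V:=R_NormedModule)).
 apply (RInt_correct (V:=C_R_CompleteNormedModule)). auto. Qed.

Lemma posq u rho : 0 < rho -> 0 < u ^ 2 + rho ^ 2.
Proof. intros. assert (0 <= u ^ 2) by apply pow2_ge_0. assert (0 < rho ^ 2) by (apply pow_lt; lra). lra. Qed.

Lemma pos_int x0 rho a b : a < b -> 0 < rho -> 0 < RInt (fun t => rho / ((t - x0) ^ 2 + rho ^ 2)) a b.
Proof.
  intros Hab Hr. apply RInt_gt_0; auto.
  - intros x _. apply Rdiv_lt_0_compat; auto. apply posq; auto.
  - intros x _. apply (ex_derive_continuous (K:=R_AbsRing) (V:=R_NormedModule)). auto_derive. apply Rgt_not_eq, posq; auto.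
Qed.

Lemma c0_neq x0 y0 rho : 0 < rho -> RI (fun s => K1 s (x0, y0)) (x0 - rho) (x0 + rho) (y0 - rho) (y0 + rho) <> RtoC 0.
Proof.
  intros Hr E.
  set (G := fun s => K1 s (x0, y0)) in E.
  assert (HbG : bcont G (x0 - rho) (x0 + rho) (y0 - rho) (y0 + rho)).
  { intros x y Hb. apply ccont_K1. eapply onb_neq; eauto. split; simpl; rewrite Rminus_diag, Rabs_R0; lra. }
  assert (HIm : Im (RI G (x0 - rho) (x0 + rho) (y0 - rho) (y0 + rho)) =
     RInt (fun t => Im (G (t, y0 - rho))) (x0 - rho) (x0 + rho) + RInt (fun t => Re (G (x0 + rho, t))) (y0 - rho) (y0 + rho)
     - RInt (fun t => Im (G (t, y0 + rho))) (x0 - rho) (x0 + rho) - RInt (fun t => Re (G (x0 - rho, t))) (y0 - rho) (y0 + rho)).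
  { rewrite <- !Im_CI, <- !Re_CI by exb. unfold RI.
    destruct (CI (fun t => G (t, y0 - rho)) (x0 - rho) (x0 + rho)), (CI (fun t => G (x0 + rho, t)) (y0 - rho) (y0 + rho)),
      (CI (fun t => G (t, y0 + rho)) (x0 - rho) (x0 + rho)), (CI (fun t => G (x0 - rho, t)) (y0 - rho) (y0 + rho)).
    unfold Cminus, Cplus, Cmult, Copp, Ci, Im, Re; simpl. ring. }
  rewrite E in HIm. simpl in HIm.
  rewrite (RInt_ext (fun t => Im (G (t, y0 - rho))) (fun t => rho / ((t - x0) ^ 2 + rho ^ 2))) in HIm.
  2: { intros t _. unfold G, K1, Cinv, Cminus, Cplus, Copp, Im; simpl. pose proof (Rle_0_sqr (t - x0)); pose proof (Rle_0_sqr (t - y0)); unfold Rsqr in *. field. nra. }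
  rewrite (RInt_ext (fun t => Re (G (x0 + rho, t))) (fun t => rho / ((t - y0) ^ 2 + rho ^ 2))) in HIm.
  2: { intros t _. unfold G, K1, Cinv, Cminus, Cplus, Copp, Re; simpl. pose proof (Rle_0_sqr (t - x0)); pose proof (Rle_0_sqr (t - y0)); unfold Rsqr in *. field. nra. }
  rewrite (RInt_ext (fun t => Im (G (t, y0 + rho))) (fun t => - (rho / ((t - x0) ^ 2 + rho ^ 2)))) in HIm.
  2: { intros t _. unfold G, K1, Cinv, Cminus, Cplus, Copp, Im; simpl. pose proof (Rle_0_sqr (t - x0)); pose proof (Rle_0_sqr (t - y0)); unfold Rsqr in *. field. nra. }
  rewrite (RInt_ext (fun t => Re (G (x0 - rho, t))) (fun t => - (rho / ((t - y0) ^ 2 + rho ^ 2)))) in HIm.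
  2: { intros t _. unfold G, K1, Cinv, Cminus, Cplus, Copp, Re; simpl. pose proof (Rle_0_sqr (t - x0)); pose proof (Rle_0_sqr (t - y0)); unfold Rsqr in *. field. nra. }
  rewrite !(RInt_opp (V:=R_CompleteNormedModule)) in HIm.
  pose proof (pos_int x0 rho (x0 - rho) (x0 + rho) ltac:(lra) Hr).
  pose proof (pos_int y0 rho (y0 - rho) (y0 + rho) ltac:(lra) Hr).
  change opp with Ropp in HIm. lra.
  all: apply (ex_RInt_continuous (V:=R_CompleteNormedModule)); intros; apply (ex_derive_continuous (K:=R_AbsRing) (V:=R_NormedModule)); auto_derive; apply Rgt_not_eq, posq; auto.
Qed.

Lemma coord_le (w z : C) : Rabs (fst w - fst z) <= Cmod (Cminus w z) /\ Rabs (snd w - snd z) <= Cmod (Cminus w z).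
Proof.
  pose proof (Rmax_Cmod (Cminus w z)). destruct w as [w1 w2], z as [z1 z2]. simpl in *.
  replace (w1 + - z1) with (w1 - z1) in H by ring. replace (w2 + - z2) with (w2 - z2) in H by ring.
  pose proof (Rmax_l (Rabs (w1 - z1)) (Rabs (w2 - z2))). pose proof (Rmax_r (Rabs (w1 - z1)) (Rabs (w2 - z2))).
  split; lra.
Qed.

Lemma inner_ball x0 y0 rho z : inner x0 y0 rho z -> exists r, 0 < r /\ forall w, Cmod (Cminus w z) < r -> inner x0 y0 rho w.
Proof.
  intros [H1 H2]. exists (Rmin (rho / 2 - Rabs (fst z - x0)) (rho / 2 - Rabs (snd z - y0))).
  split. apply Rmin_pos; lra.
  intros w Hw. destruct (coord_le w z) as [c1 c2].
  pose proof (Rmin_l (rho / 2 - Rabs (fst z - x0)) (rho / 2 - Rabs (snd z - y0))).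
  pose proof (Rmin_r (rho / 2 - Rabs (fst z - x0)) (rho / 2 - Rabs (snd z - y0))).
  pose proof (Rabs_triang (fst w - fst z) (fst z - x0)). pose proof (Rabs_triang (snd w - snd z) (snd z - y0)).
  replace (fst w - fst z + (fst z - x0)) with (fst w - x0) in H3 by ring.
  replace (snd w - snd z + (snd z - y0)) with (snd w - y0) in H4 by ring.
  split; lra.
Qed.

Theorem regularity (f : C -> C) (D : C -> Prop) :
  (forall z, D z -> exists r, 0 < r /\ forall w, Cmod (Cminus w z) < r -> D w) ->
  (forall z, D z -> exists l, Dd f z l) ->
  forall z, D z -> exists l, Dd (C_Derive f) z l.
Proof.
  intros Hopen Hhol z0 Hz0.
  destruct (Hopen z0 Hz0) as [r [Hr HB]].
  destruct z0 as [x0 y0]. set (rho := r / 4).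
  assert (Hrho : 0 < rho) by (unfold rho; lra).
  set (a := x0 - rho). set (b := x0 + rho). set (c := y0 - rho). set (d := y0 + rho).
  assert (HD : forall x y, x0 - rho <= x <= x0 + rho -> y0 - rho <= y <= y0 + rho -> exists l, Dd f (x, y) l).
  { intros x y Hx Hy. apply Hhol. apply HB.
    replace (Cminus (x, y) (x0, y0)) with ((x - x0, y - y0)%R : C) by (unfold Cminus, Cplus, Copp; simpl; f_equal; ring).
    eapply Rle_lt_trans. apply Cmod_le_sum. unfold rho in *. unfold Rabs; repeat destruct Rcase_abs; lra. }
  assert (Hbf : bcont f (x0 - rho) (x0 + rho) (y0 - rho) (y0 + rho)).
  { intros x y Hb. assert (x0 - rho <= x <= x0 + rho /\ y0 - rho <= y <= y0 + rho) as [Hx Hy] by (unfold onb in Hb; lra).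
    destruct (HD x y Hx Hy) as [l Hl]. eapply Dd_ccont; eauto. }
  set (cc := RI (fun s => K1 s (x0, y0)) (x0 - rho) (x0 + rho) (y0 - rho) (y0 + rho)).
  assert (Hc : cc <> RtoC 0) by (apply c0_neq; auto).
  set (G1 := fun w => RI (fun s => Cmult (f s) (K1 s w)) (x0 - rho) (x0 + rho) (y0 - rho) (y0 + rho)).
  set (G2 := fun w => RI (fun s => Cmult (f s) (K2 s w)) (x0 - rho) (x0 + rho) (y0 - rho) (y0 + rho)).
  assert (Hrep : forall z, inner x0 y0 rho z -> f z = Cmult (G1 z) (Cinv cc)).
  { intros z Hz. unfold G1. rewrite cauchy_id; auto.
    assert (Ecz : RI (fun s => K1 s z) (x0 - rho) (x0 + rho) (y0 - rho) (y0 + rho) = cc) by (unfold cc; apply c_const; auto).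
    rewrite Ecz. field. auto. }
  assert (Hder : forall z, inner x0 y0 rho z -> C_Derive f z = Cmult (G2 z) (Cinv cc)).
  { intros z Hz. apply CDerive_eq. destruct (inner_ball _ _ _ _ Hz) as [rz [Hrz Hball]].
    apply Dd_loc with (f := fun w => Cmult (G1 w) (Cinv cc)) (r := rz); auto.
    intros w Hw. symmetry. apply Hrep. auto.
    eapply Dd_eqv. apply Dd_mult. apply (Gdiff1 f x0 y0 rho z); auto. apply Dd_const. unfold G2. simpl. ring. }
  assert (Hz0i : inner x0 y0 rho (x0, y0)) by (split; simpl; rewrite Rminus_diag, Rabs_R0; lra).
  destruct (inner_ball _ _ _ _ Hz0i) as [rz [Hrz Hball]].
  eexists. apply Dd_loc with (f := fun w => Cmult (G2 w) (Cinv cc)) (r := rz); auto.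
  intros w Hw. symmetry. apply Hder. auto.
  apply Dd_mult. apply (Gdiff2 f x0 y0 rho (x0, y0)); auto. apply Dd_const.
Qed.

Lemma im_le_Cmod (c : C) : Rabs (Im c) <= Cmod c.
Proof. pose proof (Rmax_Cmod c). pose proof (Rmax_r (Rabs (fst c)) (Rabs (snd c))). unfold Im. lra. Qed.

Lemma Rd_re (G : R -> C) t l : Rd G t l -> is_derive (fun s => Re (G s)) t (Re l).
Proof.
  intros H. split.
  - apply is_linear_scal_l.
  - intros x Hx.
    assert (t = x) as E by (apply (@is_filter_lim_locally_unique R_AbsRing R_NormedModule); exact Hx); symmetry in E.
    subst x. intros eps. destruct (H eps (cond_pos eps)) as [del [Hdel Hd]].
    exists (mkposreal del Hdel). intros w Hw. specialize (Hd w Hw).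
    eapply Rle_trans. 2: exact Hd. eapply Rle_trans. 2: apply re_le_Cmod.
    right. unfold norm, minus, plus, opp, scal; simpl. unfold mult, abs; simpl. unfold Re. f_equal. ring.
Qed.

Lemma Rd_im (G : R -> C) t l : Rd G t l -> is_derive (fun s => Im (G s)) t (Im l).
Proof.
  intros H. split.
  - apply is_linear_scal_l.
  - intros x Hx.
    assert (t = x) as E by (apply (@is_filter_lim_locally_unique R_AbsRing R_NormedModule); exact Hx); symmetry in E.
    subst x. intros eps. destruct (H eps (cond_pos eps)) as [del [Hdel Hd]].
    exists (mkposreal del Hdel). intros w Hw. specialize (Hd w Hw).
    eapply Rle_trans. 2: exact Hd. eapply Rle_trans. 2: apply im_le_Cmod.
    right. unfold norm, minus, plus, opp, scal; simpl. unfold mult, abs; simpl. unfold Im. f_equal. ring.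
Qed.

Lemma px_re F x y l : Dd F (x, y) l -> is_derive (fun t => Re (F (t, y))) x (Re l).
Proof.
  intros H. rewrite (pairH x y) in H. apply Dd_line in H. apply Rd_re in H.
  rewrite Cmult_1_r in H. eapply is_derive_ext. 2: exact H. intros t. simpl. rewrite <- pairH. auto.
Qed.
Lemma px_im F x y l : Dd F (x, y) l -> is_derive (fun t => Im (F (t, y))) x (Im l).
Proof.
  intros H. rewrite (pairH x y) in H. apply Dd_line in H. apply Rd_im in H.
  rewrite Cmult_1_r in H. eapply is_derive_ext. 2: exact H. intros t. simpl. rewrite <- pairH. auto.
Qed.
Lemma py_re F x y l : Dd F (x, y) l -> is_derive (fun t => Re (F (x, t))) y (Re (Cmult l Ci)).
Proof.
  intros H. rewrite (pairV x y) in H. apply Dd_line in H. apply Rd_re in H.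
  eapply is_derive_ext. 2: exact H. intros t. simpl. rewrite <- pairV. auto.
Qed.
Lemma py_im F x y l : Dd F (x, y) l -> is_derive (fun t => Im (F (x, t))) y (Im (Cmult l Ci)).
Proof.
  intros H. rewrite (pairV x y) in H. apply Dd_line in H. apply Rd_im in H.
  eapply is_derive_ext. 2: exact H. intros t. simpl. rewrite <- pairV. auto.
Qed.

Lemma quot_der (a1 a2 b : R -> R) t0 da1 da2 db :
  is_derive a1 t0 da1 -> is_derive a2 t0 da2 -> is_derive b t0 db -> a1 t0 ^ 2 + a2 t0 ^ 2 <> 0 ->
  is_derive (fun t => b t / (a1 t ^ 2 + a2 t ^ 2)) t0
    ((db * (a1 t0 ^ 2 + a2 t0 ^ 2) - b t0 * (2 * a1 t0 * da1 + 2 * a2 t0 * da2)) / (a1 t0 ^ 2 + a2 t0 ^ 2) ^ 2).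
Proof.
  intros H1 H2 H3 Hn.
  assert (HD : is_derive (fun t => a1 t ^ 2 + a2 t ^ 2) t0 (INR 2 * da1 * a1 t0 ^ Init.Nat.pred 2 + INR 2 * da2 * a2 t0 ^ Init.Nat.pred 2)).
  { apply (is_derive_plus (K:=R_AbsRing) (V:=R_NormedModule) (fun t => a1 t ^ 2) (fun t => a2 t ^ 2)); apply is_derive_pow; auto. }
  pose proof (is_derive_div b (fun t => a1 t ^ 2 + a2 t ^ 2) t0 db _ H3 HD Hn) as H.
  simpl in H. replace ((db * (a1 t0 ^ 2 + a2 t0 ^ 2) - b t0 * (2 * a1 t0 * da1 + 2 * a2 t0 * da2)) / (a1 t0 ^ 2 + a2 t0 ^ 2) ^ 2)
    with ((db * (a1 t0 ^ 2 + a2 t0 ^ 2) - b t0 * ((1 + 1) * da1 * (a1 t0 * 1) + (1 + 1) * da2 * (a2 t0 * 1))) / (a1 t0 ^ 2 + a2 t0 ^ 2) ^ 2) by (f_equal; ring).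
  exact H.
Qed.

Lemma Nz_pos (P : C) : P <> RtoC 0 -> 0 < Re P ^ 2 + Im P ^ 2.
Proof. intros H. rewrite <- Cmod2_alt. apply Cmod_gt_0 in H. apply pow_lt. auto. Qed.

Lemma jac_formula (h g g1 g2 : C -> C) x y :
  Dd h (x, y) (Cinv (g (x, y))) -> Dd g (x, y) (g1 (x, y)) -> Dd g1 (x, y) (g2 (x, y)) -> g (x, y) <> RtoC 0 ->
  jacobian (fun x y => Re (h (x, y))) (fun x y => Re (g1 (x, y)) / (Cmod (g (x, y)) ^ 2)) x y
   = - Im (Cminus (Cmult (g (x, y)) (g2 (x, y))) (Cmult (g1 (x, y)) (g1 (x, y)))) / (Cmod (g (x, y)) ^ 2) ^ 2.
Proof.
  intros Hh Hg Hg1 Hn. unfold jacobian. cbv beta.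
  pose proof (Nz_pos _ Hn) as HN.
  replace (Derive (fun t => Re (h (t, y))) x) with (Re (Cinv (g (x, y)))) by (symmetry; apply is_derive_unique; apply px_re; auto).
  replace (Derive (fun t => Re (h (x, t))) y) with (Re (Cmult (Cinv (g (x, y))) Ci)) by (symmetry; apply is_derive_unique; apply py_re; auto).
  assert (E3 : is_derive (fun t => Re (g1 (t, y)) / Cmod (g (t, y)) ^ 2) x
     ((Re (g2 (x, y)) * (Re (g (x, y)) ^ 2 + Im (g (x, y)) ^ 2) - Re (g1 (x, y)) * (2 * Re (g (x, y)) * Re (g1 (x, y)) + 2 * Im (g (x, y)) * Im (g1 (x, y)))) / (Re (g (x, y)) ^ 2 + Im (g (x, y)) ^ 2) ^ 2)).
  { apply is_derive_ext with (f := fun t => Re (g1 (t, y)) / (Re (g (t, y)) ^ 2 + Im (g (t, y)) ^ 2)).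
    intros t. rewrite Cmod2_alt. reflexivity.
    apply (quot_der (fun t => Re (g (t, y))) (fun t => Im (g (t, y))) (fun t => Re (g1 (t, y)))).
    apply px_re; auto. apply px_im; auto. apply px_re; auto. lra. }
  assert (E4 : is_derive (fun t => Re (g1 (x, t)) / Cmod (g (x, t)) ^ 2) y
     ((Re (Cmult (g2 (x, y)) Ci) * (Re (g (x, y)) ^ 2 + Im (g (x, y)) ^ 2) - Re (g1 (x, y)) * (2 * Re (g (x, y)) * Re (Cmult (g1 (x, y)) Ci) + 2 * Im (g (x, y)) * Im (Cmult (g1 (x, y)) Ci))) / (Re (g (x, y)) ^ 2 + Im (g (x, y)) ^ 2) ^ 2)).
  { apply is_derive_ext with (f := fun t => Re (g1 (x, t)) / (Re (g (x, t)) ^ 2 + Im (g (x, t)) ^ 2)).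
    intros t. rewrite Cmod2_alt. reflexivity.
    apply (quot_der (fun t => Re (g (x, t))) (fun t => Im (g (x, t))) (fun t => Re (g1 (x, t)))).
    apply py_re; auto. apply py_im; auto. apply py_re; auto. lra. }
  match type of E3 with is_derive _ _ ?l => replace (Derive (fun t => Re (g1 (t, y)) / Cmod (g (t, y)) ^ 2) x) with l by (symmetry; apply is_derive_unique; exact E3) end.
  match type of E4 with is_derive _ _ ?l => replace (Derive (fun t => Re (g1 (x, t)) / Cmod (g (x, t)) ^ 2) y) with l by (symmetry; apply is_derive_unique; exact E4) end.
  rewrite Cmod2_alt.
  destruct (g (x, y)) as [p q], (g1 (x, y)) as [r s], (g2 (x, y)) as [u v].
  unfold Re, Im in *. simpl in *. field. lra.
Qed.

Lemma open_ball (D : C -> Prop) : @open C_UniformSpace D ->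
  forall z, D z -> exists r, 0 < r /\ forall w, Cmod (Cminus w z) < r -> D w.
Proof.
  intros H z Hz. destruct (H z Hz) as [eps He]. exists eps. split. apply cond_pos.
  intros w Hw. apply He. destruct (coord_le w z) as [c1 c2]. split.
  - change (Rabs (fst w - fst z) < eps). lra.
  - change (Rabs (snd w - snd z) < eps). lra.
Qed.

Lemma ball_open_C (P : C -> Prop) :
  (forall z, P z -> exists r, 0 < r /\ forall w, Cmod (Cminus w z) < r -> P w) -> @open C_UniformSpace P.
Proof.
  intros H z Hz. destruct (H z Hz) as [r [Hr Hb]].
  exists (mkposreal (r / 2) ltac:(lra)). intros w [H1 H2]. apply Hb.
  change (Rabs (fst w - fst z) < r / 2) in H1. change (Rabs (snd w - snd z) < r / 2) in H2.
  destruct w as [w1 w2], z as [z1 z2]. simpl in *.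
  replace (Cminus (w1, w2) (z1, z2)) with ((w1 - z1, w2 - z2)%R : C) by (unfold Cminus, Cplus, Copp; simpl; f_equal; ring).
  eapply Rle_lt_trans. apply Cmod_le_sum. lra.
Qed.

Lemma Imzero_der K x y l r : Dd K (x, y) l -> 0 < r ->
  (forall w, Cmod (Cminus w (x, y)) < r -> Im (K w) = 0) -> l = RtoC 0.
Proof.
  intros HD Hr H0.
  assert (Hx : Im l = 0).
  { pose proof (px_im K x y l HD) as H.
    apply (is_derive_ext_loc _ (fun _ => 0)) in H.
    - pose proof (is_derive_unique _ _ _ H). pose proof (is_derive_unique _ _ _ (is_derive_const (K:=R_AbsRing) (V:=R_NormedModule) 0 x)).
      rewrite H1 in H2. exact H2.
    - exists (mkposreal r Hr). intros t Ht. apply H0.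
      change (Rabs (t - x) < r) in Ht.
      eapply Rle_lt_trans. apply Cmod_le_sum. simpl. replace (t + - x) with (t - x) by ring. replace (y + - y) with 0 by ring. rewrite Rabs_R0. lra. }
  assert (Hy : Re l = 0).
  { pose proof (py_im K x y l HD) as H.
    apply (is_derive_ext_loc _ (fun _ => 0)) in H.
    - pose proof (is_derive_unique _ _ _ H). pose proof (is_derive_unique _ _ _ (is_derive_const (K:=R_AbsRing) (V:=R_NormedModule) 0 y)).
      rewrite H1 in H2. destruct l as [l1 l2]. unfold Cmult, Ci, Im, Re in *. simpl in *. unfold zero in H2; simpl in H2. lra.
    - exists (mkposreal r Hr). intros t Ht. apply H0.
      change (Rabs (t - y) < r) in Ht.
      eapply Rle_lt_trans. apply Cmod_le_sum. simpl. replace (t + - y) with (t - y) by ring. replace (x + - x) with 0 by ring. rewrite Rabs_R0. lra. }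
  destruct l as [l1 l2]. unfold Re, Im in *. simpl in *. subst. reflexivity.
Qed.

Lemma ball_const K z r : 0 < r -> (forall w, Cmod (Cminus w z) < r -> Dd K w (RtoC 0)) ->
  forall w, Cmod (Cminus w z) < r -> K w = K z.
Proof.
  intros Hr HD w Hw.
  assert (E : Cplus z (Cminus w z) = w) by ring.
  pose proof (const_segment K z (Cminus w z)) as H. rewrite E in H. apply H.
  intros t Ht. apply HD.
  replace (Cminus (Cplus z (Cmult (RtoC t) (Cminus w z))) z) with (Cmult (RtoC t) (Cminus w z)) by ring.
  rewrite Cmod_mult, Cmod_R, Rabs_pos_eq by lra. pose proof (Cmod_ge_0 (Cminus w z)). nra.
Qed.

Lemma conn_const (D : C -> Prop) K : connected_set D ->
  (forall z, D z -> exists r, 0 < r /\ forall w, Cmod (Cminus w z) < r -> D w) ->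
  (forall z, D z -> Dd K z (RtoC 0)) ->
  forall z1 z2, D z1 -> D z2 -> K z2 = K z1.
Proof.
  intros Hc Ho HD z1 z2 H1 H2.
  set (U := fun z => exists r, 0 < r /\ forall w, Cmod (Cminus w z) < r -> D w /\ K w = K z1).
  set (V := fun z => exists r, 0 < r /\ forall w, Cmod (Cminus w z) < r -> D w /\ K w <> K z1).
  assert (Hloc : forall z, D z -> exists r, 0 < r /\ forall w, Cmod (Cminus w z) < r -> D w /\ K w = K z).
  { intros z Hz. destruct (Ho z Hz) as [r [Hr Hb]]. exists r. split; auto. intros w Hw. split; auto.
    apply (ball_const K z r); auto. }
  assert (Hsub : forall z r, 0 < r -> forall w, Cmod (Cminus w z) < r / 2 -> forall w', Cmod (Cminus w' w) < r / 2 -> Cmod (Cminus w' z) < r).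
  { intros z r Hr w Hw w' Hw'. replace (Cminus w' z) with (Cplus (Cminus w' w) (Cminus w z)) by ring.
    eapply Rle_lt_trans. apply Cmod_triangle. lra. }
  assert (HU : @open C_UniformSpace U).
  { apply ball_open_C. intros z [r [Hr Hb]]. exists (r / 2). split. lra. intros w Hw.
    exists (r / 2). split. lra. intros w' Hw'. apply Hb. eapply Hsub; eauto. }
  assert (HV : @open C_UniformSpace V).
  { apply ball_open_C. intros z [r [Hr Hb]]. exists (r / 2). split. lra. intros w Hw.
    exists (r / 2). split. lra. intros w' Hw'. apply Hb. eapply Hsub; eauto. }
  assert (Hcov : forall z, D z -> U z \/ V z).
  { intros z Hz. destruct (Hloc z Hz) as [r [Hr Hb]].
    destruct (excluded_middle_informative (K z = K z1)) as [E|E].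
    - left. exists r. split; auto. intros w Hw. destruct (Hb w Hw). split; auto. congruence.
    - right. exists r. split; auto. intros w Hw. destruct (Hb w Hw). split; auto. congruence. }
  assert (Hz0 : forall z, Cmod (Cminus z z) = 0) by (intros; unfold Cminus; rewrite Cplus_opp_r, Cmod_0; auto).
  destruct (Hcov z2 H2) as [[r [Hr Hb]]|HV2].
  - destruct (Hb z2) as [_ E]. rewrite Hz0; auto. auto.
  - exfalso. destruct (Hc U V HU HV Hcov) as [z [Hz [[r1 [Hr1 Hb1]] [r2 [Hr2 Hb2]]]]].
    + exists z1. split; auto. destruct (Hloc z1 H1) as [r [Hr Hb]]. exists r. split; auto.
    + exists z2. split; auto.
    + destruct (Hb1 z) as [_ E1]. rewrite Hz0; auto. destruct (Hb2 z) as [_ E2]. rewrite Hz0; auto. auto.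
Qed.

Lemma exDd_C f z : (exists l, Dd f z l) -> Dd f z (C_Derive f z).
Proof. intros [l Hl]. rewrite (CDerive_eq f z l Hl). auto. Qed.

Theorem lemma2 (D : C -> Prop) (h : C -> C)
  (hD : is_domain D)
  (hhol : holomorphic_on D h)
  (hnz : forall z, D z -> C_Derive h z <> RtoC 0) :
  let g : C -> C := fun w => Cinv (C_Derive h w) in
  let g' : C -> C := C_Derive g in
  let g'' : C -> C := C_Derive g' in
  let phi : R -> R -> R := fun x y => Re (h (x, y)) in
  let psi : R -> R -> R :=
    fun x y => Re (g' (x, y)) / (Cmod (g (x, y)) ^ 2) in
  (forall x y : R, D (x, y) -> jacobian phi psi x y = 0)
  <->
  (exists c : R, forall w : C, D w -> Cminus (Cmult (g w) (g'' w)) (Cmult (g' w) (g' w)) = RtoC c).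
Proof.
  intros g g' g'' phi psi.
  destruct hD as [Hop [Hconn [zs Hzs]]].
  pose proof (open_ball D Hop) as HO.
  assert (Hh : forall z, D z -> exists l, Dd h z l).
  { intros z Hz. destruct (hhol z Hz) as [l Hl]. exists l. apply Cder_Dd. auto. }
  assert (Hh1 : forall z, D z -> exists l, Dd (C_Derive h) z l) by (apply regularity; auto).
  assert (Hg : forall z, D z -> Dd g z (g' z)).
  { intros z Hz. apply exDd_C. eexists. unfold g. apply Dd_inv. apply exDd_C. auto. auto. }
  assert (Hg1 : forall z, D z -> Dd g' z (g'' z)).
  { intros z Hz. apply exDd_C. unfold g'. apply (regularity g D); auto. intros; eexists; eauto. }
  assert (Hg2 : forall z, D z -> exists l, Dd g'' z l).
  { intros z Hz. unfold g''. apply (regularity g' D); auto. intros; eexists; eauto. }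
  assert (Hgn : forall z, D z -> g z <> RtoC 0).
  { intros z Hz E. unfold g in E. apply (hnz z Hz). 
    replace (C_Derive h z) with (Cmult (C_Derive h z) (Cmult (C_Derive h z) (Cinv (C_Derive h z)))).
    rewrite E. ring. field. auto. }
  assert (Hhd : forall z, D z -> Dd h z (Cinv (g z))).
  { intros z Hz. unfold g. replace (Cinv (Cinv (C_Derive h z))) with (C_Derive h z) by (field; auto).
    apply exDd_C; auto. }
  assert (HJ : forall x y, D (x, y) -> jacobian phi psi x y =
     - Im (Cminus (Cmult (g (x, y)) (g'' (x, y))) (Cmult (g' (x, y)) (g' (x, y)))) / (Cmod (g (x, y)) ^ 2) ^ 2).
  { intros x y Hxy. unfold phi, psi. apply jac_formula; auto. }
  assert (HNp : forall z, D z -> 0 < Cmod (g z) ^ 2) by (intros z Hz; apply pow_lt; apply Cmod_gt_0; auto).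
  split.
  - intros HJ0.
    set (K := fun w => Cminus (Cmult (g w) (g'' w)) (Cmult (g' w) (g' w))).
    assert (HIm : forall z, D z -> Im (K z) = 0).
    { intros [x y] Hz. specialize (HJ0 x y Hz). rewrite HJ in HJ0 by auto.
      specialize (HNp _ Hz). unfold K.
      set (I := Im (Cminus (Cmult (g (x, y)) (g'' (x, y))) (Cmult (g' (x, y)) (g' (x, y))))) in *.
      set (N := Cmod (g (x, y)) ^ 2) in *.
      assert (0 < N ^ 2) by (apply pow_lt; auto).
      apply Rmult_eq_compat_r with (r := N ^ 2) in HJ0. unfold Rdiv in HJ0.
      rewrite Rmult_assoc, Rinv_l, Rmult_0_l in HJ0 by lra. lra. }
    assert (HK0 : forall z, D z -> Dd K z (RtoC 0)).
    { intros [x y] Hz. destruct (Hg2 _ Hz) as [l3 Hl3].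
      assert (HKd : Dd K (x, y) (Cminus (Cplus (Cmult (g' (x, y)) (g'' (x, y))) (Cmult (g (x, y)) l3))
                                   (Cplus (Cmult (g'' (x, y)) (g' (x, y))) (Cmult (g' (x, y)) (g'' (x, y)))))).
      { unfold K. apply Dd_minus; apply Dd_mult; auto. }
      destruct (HO _ Hz) as [r [Hr Hb]].
      pose proof (Imzero_der K x y _ r HKd Hr) as E. rewrite E in HKd. auto.
      intros w Hw. apply HIm. auto. }
    exists (Re (K zs)). intros w Hw.
    change (K w = RtoC (Re (K zs))).
    rewrite (conn_const D K Hconn HO HK0 zs w Hzs Hw).
    specialize (HIm zs Hzs). destruct (K zs) as [k1 k2]. unfold Re, Im, RtoC in *. simpl in *. subst. auto.
  - intros [c Hc] x y Hxy. rewrite HJ by auto. rewrite Hc by auto. simpl. unfold Rdiv. ring.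
Qed.
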